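(* Let $W=W(\Phi)$ be any finite Weyl group, let $u\in W$ be separable, and let $U=[e,u]_R=\{v\in W: v\leq_R u\}$. Then $(W/U,U)$ is a splitting of $W$; that is, the multiplication map $W/U\times U\to W$, $(x,y)\mapsto xy$, is a bijection and satisfies $\ell(xy)=\ell(x)+\ell(y)$ for all $x\in W/U$, $y\in U$.
   Context: $\Phi$ is a finite crystallographic root system with simple roots $\Delta$ and positive roots $\Phi^+$; $W=W(\Phi)$ is its Weyl group, generated by the simple reflections $s_\alpha$, $\alpha\in\Delta$. The length $\ell(w)$ is the minimal number of simple reflections in an expression for $w$. The inversion set is $I_\Phi(w)=\{\beta\in\Phi^+: w\beta\in-\Phi^+\}$, and $\ell(w)=|I_\Phi(w)|$. Left weak order: $v\leq_L w$ iff $I_\Phi(v)\subseteq I_\Phi(w)$ (equivalently $w=zv$ with $\ell(w)=\ell(z)+\ell(v)$); right weak order: $v\leq_R w$ iff $v^{-1}\leq_L w^{-1}$. The root poset on $\Phi^+$: $\beta\leq\beta'$ iff $\beta'-\beta$ is a nonnegative integer combination of simple roots. For $J\subseteq\Delta$, $\Phi_J$ is the set of roots in the span of $J$; more generally for a subsystem $\Phi'=\Phi\cap V$ ($V$ a linear subspace), $w|_{\Phi'}$ denotes the element $w'\in W(\Phi')$ with $I_{\Phi'}(w')=I_\Phi(w)\cap V$. An element $w\in W(\Phi)$ is separable if (S1) $\Phi$ is of type $A_1$; or (S2) $\Phi=\bigoplus_i\Phi_i$ is reducible and each $w|_{\Phi_i}$ is separable; or (S3) $\Phi$ is irreducible and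 there is $\alpha_i\in\Delta$ (a pivot) such that $w|_{\Phi_J}$ is separable for $J=\Delta\setminus\{\alpha_i\}$, and either $\{\beta\in\Phi^+:\beta\geq\alpha_i\}\subseteq I_\Phi(w)$ or $\{\beta\in\Phi^+:\beta\geq\alpha_i\}\cap I_\Phi(w)=\emptyset$. For $U\subseteq W$, the generalized quotient is $W/U=\{w\in W: \ell(wu)=\ell(w)+\ell(u)\ \forall u\in U\}$. A pair $(X,Y)$ of subsets of $W$ is a splitting of $W$ if the map $X\times Y\to W$, $(x,y)\mapsto xy$, is a bijection with $\ell(xy)=\ell(x)+\ell(y)$ for all $x\in X,y\in Y$. *)

(* Defs.v *)
(* Root systems are modelled concretely as finite sets of
   column vectors in R^n (R any real field) with the standard inner product;
   Weyl group elements are n x n matrices acting on the left. *)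
From HB Require Import structures.
From mathcomp Require Import all_boot all_order all_algebra.
From Stdlib Require Import ClassicalEpsilon.
Set Implicit Arguments. Unset Strict Implicit. Unset Printing Implicit Defensive.
Import Order.TTheory GRing.Theory Num.Theory.
Local Open Scope ring_scope.

Section RootSystems.
Variables (R : realFieldType) (n r : nat).
Notation vec := 'cV[R]_n.
Notation mat := 'M[R]_n.

Definition dotv (u v : vec) : R := (u^T *m v) 0 0.

(* the reflection s_a as a matrix: s_a v = v - (2 (a,v)/(a,a)) a *)
Definition refl (a : vec) : mat := 1%:M - (2 / dotv a a) *: (a *m a^T).

(* finite, reduced, crystallographic root system (not required to span) *)
Definition root_system (Phi : seq vec) : Prop :=
  [/\ 0 \notin Phi,
      (forall a b, a \in Phi -> b \in Phi -> refl a *m b \in Phi),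
      (forall a b, a \in Phi -> b \in Phi ->
         exists z : int, 2 * dotv a b / dotv a a = z%:~R) &
      (forall a (c : R), a \in Phi -> c *: a \in Phi -> c = 1 \/ c = -1)].

Definition nncomb (Delta : 'I_r -> vec) (b : vec) : Prop :=
  exists c : 'I_r -> nat, b = \sum_(i < r) (c i)%:R *: Delta i.

Definition simple_system (Phi : seq vec) (Delta : 'I_r -> vec) : Prop :=
  [/\ (forall i, Delta i \in Phi),
      (forall c : 'I_r -> R, \sum_(i < r) c i *: Delta i = 0 -> forall i, c i = 0) &
      (forall b, b \in Phi -> nncomb Delta b \/ nncomb Delta (- b))].

Definition posroot (Phi : seq vec) (Delta : 'I_r -> vec) (b : vec) : Prop :=
  b \in Phi /\ nncomb Delta b.

Definition rootle (Delta : 'I_r -> vec) (b b' : vec) : Prop := nncomb Delta (b' - b).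

Definition in_span (Delta : 'I_r -> vec) (J : {set 'I_r}) (b : vec) : Prop :=
  exists c : 'I_r -> R, b = \sum_(i in J) c i *: Delta i.

Definition word_mx (Delta : 'I_r -> vec) (s : seq 'I_r) : mat :=
  foldr (fun i m => refl (Delta i) *m m) 1%:M s.

Definition inW (Delta : 'I_r -> vec) (w : mat) : Prop :=
  exists s, w = word_mx Delta s.

Definition is_length (Delta : 'I_r -> vec) (w : mat) (k : nat) : Prop :=
  (exists s, size s = k /\ w = word_mx Delta s) /\
  (forall s, w = word_mx Delta s -> (k <= size s)%N).

Definition ell (Delta : 'I_r -> vec) (w : mat) : nat :=
  epsilon (inhabits 0%N) (is_length Delta w).

Definition inv_set (Phi : seq vec) (Delta : 'I_r -> vec) (w : mat) (b : vec) : Prop :=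
  posroot Phi Delta b /\ posroot Phi Delta (- (w *m b)).

Definition leL (Phi : seq vec) (Delta : 'I_r -> vec) (v w : mat) : Prop :=
  forall b, inv_set Phi Delta v b -> inv_set Phi Delta w b.

Definition leR (Phi : seq vec) (Delta : 'I_r -> vec) (v w : mat) : Prop :=
  leL Phi Delta (invmx v) (invmx w).

Definition irreducible_sub (Phi : seq vec) (Delta : 'I_r -> vec) (J : {set 'I_r}) : Prop :=
  (exists b, b \in Phi /\ in_span Delta J b) /\
  forall P : vec -> Prop,
    (forall b c, b \in Phi -> in_span Delta J b -> c \in Phi -> in_span Delta J c ->
        P b -> ~ P c -> dotv b c = 0) ->
    (forall b, b \in Phi -> in_span Delta J b -> P b) \/
    (forall b, b \in Phi -> in_span Delta J b -> ~ P b).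

(* sep_sub Phi Delta w J : the restriction w|_{Phi_J} (the element of W(Phi_J)
   with inversion set I_Phi(w) cap span J) is separable.  Phi_J has simple
   roots J and positive roots Phi^+ cap span J. *)
Inductive sep_sub (Phi : seq vec) (Delta : 'I_r -> vec) (w : mat) : {set 'I_r} -> Prop :=
| sep_A1 (i : 'I_r) : sep_sub Phi Delta w [set i]
| sep_red (J1 J2 : {set 'I_r}) :
    J1 != set0 -> J2 != set0 -> [disjoint J1 & J2] ->
    (forall i j, i \in J1 -> j \in J2 -> dotv (Delta i) (Delta j) = 0) ->
    sep_sub Phi Delta w J1 -> sep_sub Phi Delta w J2 ->
    sep_sub Phi Delta w (J1 :|: J2)
| sep_irr (J : {set 'I_r}) (i : 'I_r) :
    irreducible_sub Phi Delta J -> i \in J ->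
    sep_sub Phi Delta w (J :\ i) ->
    ((forall b, posroot Phi Delta b -> in_span Delta J b -> rootle Delta (Delta i) b ->
        inv_set Phi Delta w b) \/
     (forall b, posroot Phi Delta b -> in_span Delta J b -> rootle Delta (Delta i) b ->
        ~ inv_set Phi Delta w b)) ->
    sep_sub Phi Delta w J.

Definition separable (Phi : seq vec) (Delta : 'I_r -> vec) (w : mat) : Prop :=
  sep_sub Phi Delta w [set: 'I_r].

Definition gquot (Delta : 'I_r -> vec) (U : mat -> Prop) (w : mat) : Prop :=
  inW Delta w /\ forall u, U u -> ell Delta (w *m u) = (ell Delta w + ell Delta u)%N.

Definition splitting (Delta : 'I_r -> vec) (X Y : mat -> Prop) : Prop :=
  [/\ (forall x y, X x -> Y y -> inW Delta (x *m y)),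
      (forall w, inW Delta w -> exists x y, [/\ X x, Y y & w = x *m y]),
      (forall x y x' y', X x -> Y y -> X x' -> Y y' -> x *m y = x' *m y' ->
         x = x' /\ y = y') &
      (forall x y, X x -> Y y -> ell Delta (x *m y) = (ell Delta x + ell Delta y)%N)].

End RootSystems.

(* Main.v *)
From HB Require Import structures.
From mathcomp Require Import all_boot all_order all_algebra.
From Stdlib Require Import ClassicalEpsilon.
Require Import Defs.
From mathcomp Require Import ring lra zify.
Set Implicit Arguments. Unset Strict Implicit. Unset Printing Implicit Defensive.
Import Order.TTheory GRing.Theory Num.Theory.
Local Open Scope ring_scope.
Section Basic.
Variables (R : realFieldType) (n : nat).
Notation vec := 'cV[R]_n.
Notation mat := 'M[R]_n.

Lemma mx_ext (A B : mat) : (forall v : vec, A *m v = B *m v) -> A = B.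
Proof.
move=> H; apply/matrixP => i j.
have := congr1 (fun M : vec => M i 0) (H (delta_mx j 0)).
by rewrite -!colE !mxE.
Qed.

Lemma dotvE (u v : vec) : dotv u v = \sum_k u k 0 * v k 0.
Proof. by rewrite /dotv !mxE; apply: eq_bigr => k _; rewrite mxE. Qed.

Lemma dotvC (u v : vec) : dotv u v = dotv v u.
Proof. by rewrite !dotvE; apply: eq_bigr => k _; rewrite mulrC. Qed.

Lemma dotvDr (u v w : vec) : dotv u (v + w) = dotv u v + dotv u w.
Proof. by rewrite /dotv mulmxDr mxE. Qed.

Lemma dotvZr (u v : vec) (c : R) : dotv u (c *: v) = c * dotv u v.
Proof. by rewrite /dotv -scalemxAr mxE. Qed.

Lemma dotvNr (u v : vec) : dotv u (- v) = - dotv u v.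
Proof. by rewrite -scaleN1r dotvZr mulN1r. Qed.

Lemma dotvBr (u v w : vec) : dotv u (v - w) = dotv u v - dotv u w.
Proof. by rewrite dotvDr dotvNr. Qed.

Lemma dotv_gt0 (a : vec) : a != 0 -> 0 < dotv a a.
Proof.
move=> a0.
have sq : forall k : 'I_n, xpredT k -> 0 <= a k 0 * a k 0 by move=> k _; rewrite -expr2 sqr_ge0.
rewrite dotvE lt_def sumr_ge0 ?andbT //.
apply/negP => /eqP H; move/negP: a0; apply; apply/eqP/matrixP => i j.
rewrite (ord1 j) mxE.
have := psumr_eq0P sq H (i := i) isT.
by move=> /eqP; rewrite mulf_eq0 orbb => /eqP.
Qed.

Lemma refl_mul (a v : vec) :
  refl a *m v = v - (2 / dotv a a * dotv a v) *: a.
Proof.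
rewrite /refl mulmxBl mul1mx -scalemxAl -mulmxA.
have -> : a^T *m v = (dotv a v)%:M by rewrite [LHS]mx11_scalar.
by rewrite mul_mx_scalar scalerA.
Qed.

Lemma refl_self (a : vec) : a != 0 -> refl a *m a = - a.
Proof.
move=> a0; rewrite refl_mul divfK; last by rewrite gt_eqF // dotv_gt0.
by rewrite scaler_nat mulr2n opprD addrA subrr add0r.
Qed.

Lemma refl_invol (a : vec) : a != 0 -> refl a *m refl a = 1%:M.
Proof.
move=> a0; apply: mx_ext => v; rewrite -mulmxA mul1mx.
have d0 : dotv a a != 0 by rewrite gt_eqF // dotv_gt0.
rewrite [refl a *m v]refl_mul refl_mul.
rewrite dotvBr dotvZr.
set c := 2 / dotv a a * dotv a v.
have -> : 2 / dotv a a * (dotv a v - c * dotv a a) = - c.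
  rewrite /c mulrBr; field.
  by [].
by rewrite scaleNr opprK subrK.
Qed.

Lemma refl_tr (a : vec) : (refl a)^T = refl a.
Proof. by rewrite /refl linearB /= trmx1 linearZ /= trmx_mul trmxK. Qed.

Definition orth (g : mat) := g^T *m g = 1%:M.

Lemma orth_tr (g : mat) : orth g -> g *m g^T = 1%:M.
Proof. by move/mulmx1C. Qed.

Lemma orth_refl (a : vec) : a != 0 -> orth (refl a).
Proof. by move=> a0; rewrite /orth refl_tr refl_invol. Qed.

Lemma orth_mul (g h : mat) : orth g -> orth h -> orth (g *m h).
Proof.
rewrite /orth => Hg Hh; rewrite trmx_mul mulmxA -[h^T *m g^T *m g]mulmxA Hg.
by rewrite mulmx1 Hh.
Qed.

Lemma orth1 : orth 1%:M.
Proof. by rewrite /orth trmx1 mulmx1. Qed.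

Lemma orthT (g : mat) : orth g -> orth g^T.
Proof. by move=> H; rewrite /orth trmxK orth_tr. Qed.

Lemma dotv_orth (g : mat) (u v : vec) : orth g -> dotv (g *m u) (g *m v) = dotv u v.
Proof. by move=> H; rewrite /dotv trmx_mul -mulmxA [g^T *m _]mulmxA H mul1mx. Qed.

Lemma refl_conj (g : mat) (a : vec) : orth g ->
  g *m refl a *m g^T = refl (g *m a).
Proof.
move=> H; rewrite /refl dotv_orth // mulmxBr mulmx1 mulmxBl orth_tr //.
by rewrite -scalemxAr -scalemxAl !mulmxA trmx_mul !mulmxA.
Qed.

End Basic.
Definition asb (P : Prop) : bool := if excluded_middle_informative P then true else false.
Lemma asbP (P : Prop) : reflect P (asb P).
Proof. by rewrite /asb; case: excluded_middle_informative => H; constructor. Qed.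

Lemma count_split (T : Type) (a b : pred T) (l : seq T) :
  count a l = (count (fun x => a x && b x) l + count (fun x => a x && ~~ b x) l)%N.
Proof. by elim: l => //= x l ->; case: (a x); case: (b x) => //=; lia. Qed.


Section Roots.
Variables (R : realFieldType) (n r : nat) (Phi : seq 'cV[R]_n) (Delta : 'I_r -> 'cV[R]_n).
Hypothesis HPhi : root_system Phi.
Hypothesis HD : simple_system Phi Delta.
Notation vec := 'cV[R]_n.
Notation mat := 'M[R]_n.
Notation s i := (refl (Delta i)).
Notation word := (word_mx Delta).

Lemma root_neq0 b : b \in Phi -> b != 0.
Proof. by move=> Hb; apply/eqP => E; case: HPhi => H0 _ _ _; rewrite -E Hb in H0. Qed.

Lemma delta_root i : Delta i \in Phi.
Proof. by case: HD. Qed.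

Lemma delta_neq0 i : Delta i != 0.
Proof. exact/root_neq0/delta_root. Qed.

Lemma refl_root a b : a \in Phi -> b \in Phi -> refl a *m b \in Phi.
Proof. by case: HPhi => _ H _ _; apply: H. Qed.

Lemma oppr_root b : b \in Phi -> - b \in Phi.
Proof. by move=> Hb; rewrite -refl_self ?root_neq0 // refl_root. Qed.

Lemma s_invol i : s i *m s i = 1%:M.
Proof. exact/refl_invol/delta_neq0. Qed.

Lemma word_cons i t : word (i :: t) = s i *m word t.
Proof. by []. Qed.

Lemma word_cat t1 t2 : word (t1 ++ t2) = word t1 *m word t2.
Proof. by elim: t1 => [|i t IH] /=; rewrite ?mul1mx // IH mulmxA. Qed.

Lemma word_rcons t i : word (rcons t i) = word t *m s i.
Proof. by rewrite -cats1 word_cat /= mulmx1. Qed.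

Lemma word_orth t : orth (word t).
Proof. elim: t => [|i t IH] /=; [exact: orth1 | exact/orth_mul/IH/orth_refl/delta_neq0]. Qed.

Lemma word_tr t : (word t)^T = word (rev t).
Proof.
elim: t => [|i t IH] /=; first by rewrite trmx1.
by rewrite trmx_mul IH refl_tr rev_cons word_rcons.
Qed.

Lemma word_root t b : b \in Phi -> word t *m b \in Phi.
Proof.
elim: t b => [|i t IH] b Hb /=; first by rewrite mul1mx.
by rewrite -mulmxA refl_root ?delta_root ?IH.
Qed.

Definition Dmx : 'M[R]_(r, n) := \matrix_(i, j) Delta i j 0.

Lemma indep (c : 'I_r -> R) : \sum_(i < r) c i *: Delta i = 0 -> forall i, c i = 0.
Proof. by case: HD => _ H _; apply: H. Qed.

Lemma Dmx_free : row_free Dmx.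
Proof.
apply: inj_row_free => v Hv.
have H : \sum_(i < r) v 0 i *: Delta i = 0.
  apply/matrixP => p q; rewrite (ord1 q).
  have := congr1 (fun M : 'rV_n => M 0 p) Hv; rewrite /= !mxE => E.
  transitivity (\sum_j v 0 j * Dmx j p); last by rewrite E; case: (0 : 'cV[R]_n) => f; rewrite ?mxE.
  rewrite summxE; apply: eq_bigr => i _; rewrite !mxE.
  by rewrite mulrC.
apply/matrixP => p q; rewrite (ord1 p) mxE; exact: indep H q.
Qed.

Definition Lmx : 'M[R]_(n, r) :=
  epsilon (inhabits 0) (fun B => Dmx *m B = 1%:M).

Lemma Lmx_spec : Dmx *m Lmx = 1%:M.
Proof. by apply: (epsilon_spec (inhabits 0) (fun B => Dmx *m B = 1%:M)); apply/row_freeP/Dmx_free. Qed.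

Definition coef (k : 'I_r) (b : vec) : R := (b^T *m Lmx) 0 k.

Lemma coefD k (b c : vec) : coef k (b + c) = coef k b + coef k c.
Proof. by rewrite /coef linearD /= mulmxDl mxE. Qed.

Lemma coefZ k (x : R) (b : vec) : coef k (x *: b) = x * coef k b.
Proof. by rewrite /coef linearZ /= -scalemxAl mxE. Qed.

Lemma coefN k (b : vec) : coef k (- b) = - coef k b.
Proof. by rewrite -scaleN1r coefZ mulN1r. Qed.

Lemma coefB k (b c : vec) : coef k (b - c) = coef k b - coef k c.
Proof. by rewrite coefD coefN. Qed.

Lemma coef0 k : coef k 0 = 0.
Proof. by rewrite /coef linear0 mul0mx mxE. Qed.

Lemma coef_sum k (I : finType) (P : pred I) (F : I -> vec) :
  coef k (\sum_(i | P i) F i) = \sum_(i | P i) coef k (F i).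
Proof.
apply: (big_morph (coef k)); [exact: coefD | exact: coef0].
Qed.

Lemma coef_delta k j : coef k (Delta j) = (j == k)%:R.
Proof.
have : row j Dmx = (Delta j)^T by apply/rowP => p; rewrite !mxE.
move=> E; rewrite /coef -E -row_mul Lmx_spec row1 !mxE eqxx /=.
by rewrite eq_sym.
Qed.

Lemma coef_comb k (c : 'I_r -> R) : coef k (\sum_i c i *: Delta i) = c k.
Proof.
rewrite coef_sum (bigD1 k) //= big1 ?addr0; first by rewrite coefZ coef_delta eqxx mulr1.
by move=> i /negbTE ik; rewrite coefZ coef_delta ik mulr0.
Qed.

Lemma comb_coef_eq (c : 'I_r -> R) b : b = \sum_i c i *: Delta i -> forall k, coef k b = c k.
Proof. by move=> -> k; rewrite coef_comb. Qed.

Lemma nncomb_coef b : nncomb Delta b ->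
  b = \sum_i coef i b *: Delta i /\ forall k, exists m : nat, coef k b = m%:R.
Proof.
case=> c E; have Hc := comb_coef_eq E.
split; last by move=> k; exists (c k); rewrite Hc.
by rewrite {1}E; apply: eq_bigr => i _; rewrite Hc.
Qed.

Lemma root_span b : b \in Phi -> b = \sum_i coef i b *: Delta i.
Proof.
move=> Hb; case: HD => _ _ H; case: (H b Hb) => [/nncomb_coef [] //|/nncomb_coef [E _]].
apply: oppr_inj; rewrite {1}E -sumrN; apply: eq_bigr => i _.
by rewrite coefN scaleNr.
Qed.

Definition pos b := posroot Phi Delta b.

Lemma pos_root b : pos b -> b \in Phi.
Proof. by case. Qed.

Lemma pos_nat b : pos b -> forall k, exists m : nat, coef k b = m%:R.
Proof. by case=> _ /nncomb_coef []. Qed.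

Lemma pos_ge0 b : pos b -> forall k, 0 <= coef k b.
Proof. by move=> /pos_nat H k; case: (H k) => m ->; rewrite ler0n. Qed.

Lemma coef_all0 b : b \in Phi -> (forall k, coef k b = 0) -> False.
Proof.
move=> Hb H; move/eqP: (root_neq0 Hb); apply.
by rewrite (root_span Hb) big1 // => i _; rewrite H scale0r.
Qed.

Lemma pos_or_neg b : b \in Phi -> pos b \/ pos (- b).
Proof.
move=> Hb; case: HD => _ _ H; case: (H b Hb) => ?; [left|right]; split => //.
exact: oppr_root.
Qed.

Lemma pos_neg_excl b : pos b -> pos (- b) -> False.
Proof.
move=> Hp Hn; apply: (@coef_all0 b (pos_root Hp)) => k.
apply/eqP; rewrite eq_le pos_ge0 // andbT.
by rewrite -oppr_ge0 -coefN pos_ge0.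
Qed.

Lemma pos_coef b : b \in Phi -> (forall k, 0 <= coef k b) -> pos b.
Proof.
move=> Hb H; case: (pos_or_neg Hb) => // Hn; exfalso.
apply: (coef_all0 Hb) => k; apply/eqP; rewrite eq_le H andbT.
by rewrite -oppr_ge0 -coefN pos_ge0.
Qed.

Lemma pos_coef_gt0 b k : b \in Phi -> 0 < coef k b -> ~ pos (- b).
Proof.
move=> Hb H Hn; have := pos_ge0 Hn k; rewrite coefN oppr_ge0.
by rewrite leNgt H.
Qed.

Lemma pos_coef_gt0' b k : b \in Phi -> 0 < coef k b -> pos b.
Proof. by move=> Hb H; case: (pos_or_neg Hb) => // /(pos_coef_gt0 Hb H). Qed.

Lemma pos_delta i : pos (Delta i).
Proof. by apply: pos_coef (delta_root i) _ => k; rewrite coef_delta ler0n. Qed.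

Lemma delta_inj i j : Delta i = Delta j -> i = j.
Proof.
move=> E; have := coef_delta i i; rewrite E coef_delta eqxx.
by case: (j =P i) => // _ /= /eqP; rewrite eq_sym oner_eq0.
Qed.

Lemma s_mul i b : s i *m b = b - (2 / dotv (Delta i) (Delta i) * dotv (Delta i) b) *: Delta i.
Proof. exact: refl_mul. Qed.

Lemma coef_s k i b : k != i -> coef k (s i *m b) = coef k b.
Proof. by move=> ki; rewrite s_mul coefB coefZ coef_delta eq_sym (negbTE ki) mulr0 subr0. Qed.

Lemma s_self i : s i *m Delta i = - Delta i.
Proof. exact/refl_self/delta_neq0. Qed.

Lemma s_pos i b : pos b -> b != Delta i -> pos (s i *m b).
Proof.
move=> Hb bi; have Hr := pos_root Hb.
have Hsr : s i *m b \in Phi by rewrite refl_root ?delta_root.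
case: (pos_or_neg Hsr) => // Hn; exfalso.
have Hk : forall k, k != i -> coef k b = 0.
  move=> k ki; apply/eqP; rewrite eq_le pos_ge0 // andbT.
  by rewrite -(coef_s b ki) -oppr_ge0 -coefN pos_ge0.
have E : b = coef i b *: Delta i.
  rewrite {1}(root_span Hr) (bigD1 i) //= big1 ?addr0 // => k ki.
  by rewrite Hk // scale0r.
case: HPhi => _ _ _ Hred.
have := Hred (Delta i) (coef i b) (delta_root i); rewrite -E => /(_ Hr).
case=> Hc.
  by move/eqP: bi; apply; rewrite E Hc scale1r.
by have := pos_ge0 Hb i; rewrite Hc; lra.
Qed.

Notation isW := (inW Delta).
Definition inv (w : mat) b := inv_set Phi Delta w b.
Definition Nb (w : mat) b := asb (inv w b).
Definition pb b := asb (pos b).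
Definition ninv (w : mat) := count (Nb w) (undup Phi).

Lemma NbE w b : Nb w b = pb b && pb (- (w *m b)).
Proof.
rewrite /Nb /pb /inv /inv_set.
by case: asbP => [[H1 H2]|H]; case: asbP => // H3; case: asbP => // H4; case: H.
Qed.

Lemma pbN b : b \in Phi -> pb (- b) = ~~ pb b.
Proof.
move=> Hb; rewrite /pb; case: asbP => H1; case: asbP => H2 //=.
  by case: (pos_neg_excl H2 H1).
by case: (pos_or_neg Hb).
Qed.

Lemma isW_orth w : isW w -> orth w.
Proof. by case=> t ->; exact: word_orth. Qed.

Lemma isW_root w b : isW w -> b \in Phi -> w *m b \in Phi.
Proof. by case=> t -> Hb; exact: word_root. Qed.

Lemma isW_tr w : isW w -> isW w^T.
Proof. by case=> t ->; exists (rev t); rewrite word_tr. Qed.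

Lemma isW_mul v w : isW v -> isW w -> isW (v *m w).
Proof. by case=> t -> [t' ->]; exists (t ++ t'); rewrite word_cat. Qed.

Lemma isW1 : isW 1%:M.
Proof. by exists [::]. Qed.

Lemma isW_s i : isW (s i).
Proof. by exists [:: i]; rewrite /= mulmx1. Qed.

Lemma isW_trK w : isW w -> w *m w^T = 1%:M.
Proof. by move/isW_orth/orth_tr. Qed.

Lemma isW_Ktr w : isW w -> w^T *m w = 1%:M.
Proof. by move/isW_orth. Qed.

Lemma count_bij (f g : vec -> vec) (P : pred vec) :
  (forall b, b \in Phi -> f b \in Phi) -> (forall b, b \in Phi -> g b \in Phi) ->
  (forall b, b \in Phi -> g (f b) = b) -> (forall b, b \in Phi -> f (g b) = b) ->
  count P (undup Phi) = count (fun b => P (f b)) (undup Phi).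
Proof.
move=> Hf Hg Hgf Hfg.
have Hp : perm_eq (map f (undup Phi)) (undup Phi).
  apply: uniq_perm; last 1 first.
  - move=> x; rewrite mem_undup; apply/mapP/idP => [[y]|Hx].
      by rewrite mem_undup => Hy ->; apply: Hf.
    by exists (g x); rewrite ?mem_undup ?Hfg ?Hg.
  - rewrite map_inj_in_uniq ?undup_uniq // => x y; rewrite !mem_undup => Hx Hy E.
    by rewrite -(Hgf x Hx) E Hgf.
  - exact: undup_uniq.
by rewrite -(permP Hp) count_map.
Qed.

Lemma count_W (w : mat) P : isW w ->
  count P (undup Phi) = count (fun b => P (w *m b)) (undup Phi).
Proof.
move=> Hw; apply: (@count_bij _ (fun b => w^T *m b)).
- by move=> b; apply: isW_root.
- by move=> b; apply/isW_root/isW_tr.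
- by move=> b _; rewrite mulmxA isW_Ktr ?mul1mx.
- by move=> b _; rewrite mulmxA isW_trK ?mul1mx.
Qed.

Lemma count_opp P :
  count P (undup Phi) = count (fun b => P (- b)) (undup Phi).
Proof.
apply: (@count_bij _ (fun b => - b)); try by move=> b; apply: oppr_root.
- by move=> b _; rewrite opprK.
- by move=> b _; rewrite opprK.
Qed.

Definition kcap (x y : mat) := count (fun c => Nb x c && Nb y^T c) (undup Phi).

Lemma nat_arith6 (a f c d e : nat) : (a + f + 2 * c = d + e + f -> a + 2 * c = d + e)%N.
Proof. lia. Qed.

Lemma count_lin6 (l : seq vec) (a1 a2 a3 b1 b2 b3 : pred vec) :
  (forall x, a1 x + a2 x + 2 * a3 x = b1 x + b2 x + b3 x)%N ->
  (count a1 l + count a2 l + 2 * count a3 l = count b1 l + count b2 l + count b3 l)%N.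
Proof. move=> H; elim: l => //= x l IH; have := H x; lia. Qed.

Lemma ninv_formula x y : isW x -> isW y ->
  (ninv (x *m y) + 2 * kcap x y = ninv x + ninv y^T)%N.
Proof.
move=> Hx Hy.
set P := fun c => pb c.
set Q := fun c => pb (y^T *m c).
set S := fun c => pb (- (x *m c)).
have HyT := isW_tr Hy.
have E1 : ninv (x *m y) = count (fun c => Q c && S c) (undup Phi).
  rewrite /ninv (count_W _ HyT); apply: eq_in_count => c _.
  by rewrite NbE mulmxA -(mulmxA x) isW_trK // mulmx1.
have E2 : ninv x = count (fun c => P c && S c) (undup Phi).
  by apply: eq_in_count => c _; rewrite NbE.
have E3 : ninv y^T = count (fun c => P c && ~~ Q c) (undup Phi).
  apply: eq_in_count => c; rewrite mem_undup => Hc; rewrite NbE pbN //.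
  exact: isW_root.
have E4 : kcap x y = count (fun c => P c && S c && ~~ Q c) (undup Phi).
  apply: eq_in_count => c; rewrite mem_undup => Hc; rewrite !NbE (@pbN (y^T *m c)); last exact: isW_root.
  by rewrite /P /S /Q; case: (pb c); case: (pb (y^T *m c)); case: (pb (- (x *m c))).
have E5 : count (fun c => Q c && S c && ~~ P c) (undup Phi) =
          count (fun c => P c && ~~ Q c && ~~ S c) (undup Phi).
  rewrite count_opp; apply: eq_in_count => c; rewrite mem_undup => Hc.
  rewrite /P /Q /S !mulmxN opprK (@pbN c) // (@pbN (y^T *m c)); last exact: isW_root.
  rewrite (@pbN (x *m c)); last exact: isW_root.
  by case: (pb c); case: (pb (y^T *m c)); case: (pb (x *m c)).
rewrite E1 E2 E3 E4.
have := @count_lin6 (undup Phi) (fun c => Q c && S c) (fun c => P c && ~~ Q c && ~~ S c)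
  (fun c => P c && S c && ~~ Q c) (fun c => P c && S c) (fun c => P c && ~~ Q c)
  (fun c => Q c && S c && ~~ P c).
have Hpt : (forall z, (Q z && S z) + (P z && ~~ Q z && ~~ S z) + 2 * (P z && S z && ~~ Q z) =
    (P z && S z) + (P z && ~~ Q z) + (Q z && S z && ~~ P z))%N.
  by move=> z; case: (P z); case: (Q z); case: (S z).
move=> /(_ Hpt); rewrite E5.
exact: nat_arith6.
Qed.

Lemma ninv1 : ninv 1%:M = 0%N.
Proof.
apply/eqP; rewrite -leqn0 leqNgt -has_count; apply/hasP => -[c].
rewrite mem_undup NbE mul1mx => Hc; rewrite pbN //.
by case: (pb c).
Qed.

Lemma ninv_tr y : isW y -> ninv y^T = ninv y.
Proof.
move=> Hy; have := ninv_formula isW1 Hy; rewrite mul1mx ninv1 add0n.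
have -> : kcap 1%:M y = 0%N.
  apply/eqP; rewrite -leqn0 leqNgt -has_count; apply/hasP => -[c].
  rewrite mem_undup NbE mul1mx => Hc; rewrite pbN //.
  by case: (pb c).
by rewrite muln0 addn0 => ->.
Qed.

Lemma ninv_formula' x y : isW x -> isW y ->
  (ninv (x *m y) + 2 * kcap x y = ninv x + ninv y)%N.
Proof. by move=> Hx Hy; rewrite ninv_formula // ninv_tr. Qed.

Lemma ninv_sub x y : isW x -> isW y -> (ninv (x *m y) <= ninv x + ninv y)%N.
Proof. by move=> Hx Hy; have := ninv_formula' Hx Hy; lia. Qed.

Lemma inv_s i b : inv (s i) b <-> b = Delta i.
Proof.
split.
  case=> Hb Hn; apply/eqP; apply/negP => /negP bi.
  exact: (pos_neg_excl (s_pos Hb bi) Hn).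
move=> ->; split; first exact: pos_delta.
by rewrite s_self opprK; exact: pos_delta.
Qed.

Lemma Nb_s i b : Nb (s i) b = (b == Delta i).
Proof. by rewrite /Nb; case: asbP => [/inv_s ->|H]; [rewrite eqxx | case: eqP => // /inv_s]. Qed.

Lemma uniq_count_eq1 (a : vec) : a \in Phi ->
  count (fun c => c == a) (undup Phi) = 1%N.
Proof.
move=> Ha; transitivity (count_mem a (undup Phi)); first by apply: eq_count => c; rewrite eq_sym.
by rewrite count_uniq_mem ?undup_uniq // mem_undup Ha.
Qed.

Lemma ninv_s i : ninv (s i) = 1%N.
Proof.
rewrite /ninv (eq_count (a2 := fun c => c == Delta i)); last by move=> c; rewrite Nb_s.
exact/uniq_count_eq1/delta_root.
Qed.

Lemma kcap_s w i : kcap w (s i) = Nb w (Delta i).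
Proof.
rewrite /kcap refl_tr.
rewrite (eq_count (a2 := fun c => Nb w (Delta i) && (c == Delta i))); last first.
  by move=> c; rewrite Nb_s; case: eqP => [->|]; rewrite ?andbT ?andbF.
case: (Nb w (Delta i)) => /=; last by rewrite count_pred0.
exact/uniq_count_eq1/delta_root.
Qed.

Lemma ninv_ws w i : isW w ->
  (ninv (w *m s i) + 2 * Nb w (Delta i) = ninv w + 1)%N.
Proof. by move=> Hw; have := ninv_formula' Hw (isW_s i); rewrite kcap_s ninv_s. Qed.

Lemma ninv_ws_lt w i : isW w -> Nb w (Delta i) -> (ninv (w *m s i) < ninv w)%N.
Proof. by move=> Hw H; have := ninv_ws i Hw; rewrite H; lia. Qed.

Lemma ninv_ws_gt w i : isW w -> ~~ Nb w (Delta i) -> ninv (w *m s i) = (ninv w).+1.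
Proof. by move=> Hw /negbTE H; have := ninv_ws i Hw; rewrite H; lia. Qed.

Lemma Nb_ws w i b : isW w -> Nb (w *m s i) b =
  if b == Delta i then ~~ Nb w (Delta i) else pb b && Nb w (s i *m b).
Proof.
move=> Hw; case: eqP => [->|bi].
  have Hd : pb (Delta i) by apply/asbP/pos_delta.
  rewrite !NbE -mulmxA s_self mulmxN opprK (@pbN (w *m Delta i)) ?Hd ?negbK //.
  exact/isW_root/delta_root.
rewrite !NbE /pb -mulmxA; case: asbP => //= Hb.
have Hs := s_pos Hb (introN eqP bi).
by case: asbP => //; case: asbP.
Qed.


Lemma exchange t j : pos (- (word t *m Delta j)) ->
  exists t', (size t').+1 = size t /\ word t *m s j = word t'.
Proof.
elim: t => [|i t IH] /=.
  by rewrite mul1mx => H; case: (pos_neg_excl (pos_delta j) H).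
rewrite -mulmxA => H.
have Hb : word t *m Delta j \in Phi by apply/word_root/delta_root.
case: (pos_or_neg Hb) => Hp; last first.
  case: (IH Hp) => t' [Hs E]; exists (i :: t'); split; first by rewrite /= Hs.
  by rewrite -mulmxA E.
have E : word t *m Delta j = Delta i.
  apply/eqP; apply/negPn/negP => ne.
  exact: (pos_neg_excl (s_pos Hp ne) H).
exists t; split => //.
have Hc := refl_conj (Delta j) (word_orth t); rewrite E in Hc.
rewrite -Hc -[word t *m s j *m (word t)^T *m word t]mulmxA (word_orth t) mulmx1.
by rewrite -mulmxA s_invol mulmx1.
Qed.

Lemma ninv_word t : (ninv (word t) <= size t)%N.
Proof.
elim: t => [|i t IH] /=; first by rewrite ninv1.
apply: leq_trans (ninv_sub (isW_s i) (ex_intro _ t erefl)) _.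
by rewrite ninv_s add1n ltnS.
Qed.

Lemma deletion t : (ninv (word t) < size t)%N ->
  exists t', (size t').+2 = size t /\ word t' = word t.
Proof.
elim/last_ind: t => [|t j IH]; first by rewrite ninv1.
rewrite size_rcons word_rcons => H.
case: (ltnP (ninv (word t)) (size t)) => Ht.
  case: (IH Ht) => t' [Hs E]; exists (rcons t' j); rewrite size_rcons Hs word_rcons E.
  by [].
have Et : ninv (word t) = size t by apply/eqP; rewrite eqn_leq ninv_word Ht.
have Hw : isW (word t) by exists t.
case Hn : (Nb (word t) (Delta j)); last first.
  by move: H; rewrite ninv_ws_gt ?Hn // Et ltnn.
move: Hn; rewrite /Nb; case: asbP => // [[_ Hn]] _.
case: (exchange Hn) => t' [Hs E]; exists t'; split; first by rewrite Hs.
by rewrite E.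
Qed.

Lemma reduced_word t : exists t', word t' = word t /\ size t' = ninv (word t).
Proof.
move: {2}(size t) (leqnn (size t)) => m; elim: m t => [|m IH] t.
  rewrite leqn0 => /nilP ->; exists [::]; by rewrite ninv1.
move=> Hs; case: (ltnP (ninv (word t)) (size t)) => H.
  case: (deletion H) => t' [Hs' E]; case: (IH t') => [|t'' [E' S']].
    by rewrite -ltnS (leq_trans _ Hs) // -Hs' ltnW.
  by exists t''; rewrite E' S' E.
exists t; split => //; apply/eqP; rewrite eqn_leq ninv_word H.
by [].
Qed.

Lemma is_length_ninv w : isW w -> is_length Delta w (ninv w).
Proof.
case=> t ->; split.
  by case: (reduced_word t) => t' [E S]; exists t'; rewrite E.
by move=> t' ->; apply: ninv_word.
Qed.

Lemma ell_ninv w : isW w -> ell Delta w = ninv w.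
Proof.
move=> Hw; have Hl := is_length_ninv Hw.
have He : is_length Delta w (ell Delta w).
  by apply: (epsilon_spec (inhabits 0%N) (is_length Delta w)); exists (ninv w).
case: He => [[t1 [S1 E1]] H1]; case: Hl => [[t2 [S2 E2]] H2].
apply/eqP; rewrite eqn_leq -{1}S2 H1 // -S1 H2 //.
Qed.

Lemma ninv0 w : isW w -> ninv w = 0%N -> w = 1%:M.
Proof.
case=> t -> H; case: (reduced_word t) => t' [E S]; rewrite H in S.
by move/size0nil: S => S; rewrite -E S.
Qed.

Definition spanJ (J : {set 'I_r}) (b : vec) := forall k, k \notin J -> coef k b = 0.

Lemma mulmx_comb (w : mat) (c : 'I_r -> R) :
  w *m (\sum_i c i *: Delta i) = \sum_i c i *: (w *m Delta i).
Proof. by rewrite mulmx_sumr; apply: eq_bigr => i _; rewrite scalemxAr. Qed.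

Lemma descentJ w (J : {set 'I_r}) : isW w -> (forall j, j \in J -> ~ inv w (Delta j)) ->
  forall b, pos b -> spanJ J b -> ~ inv w b.
Proof.
move=> Hw HJ b Hb Hs [_ Hn].
have Hr := pos_root Hb.
have Hwb : w *m b \in Phi by apply: isW_root.
suff : pos (w *m b) by move=> Hp; exact: pos_neg_excl Hp Hn.
apply: pos_coef => // l.
rewrite (root_span Hr) mulmx_comb coef_sum sumr_ge0 // => k _.
rewrite coefZ; case: (boolP (k \in J)) => kJ; last by rewrite Hs // mul0r.
apply: mulr_ge0; first exact: pos_ge0.
have Hk : w *m Delta k \in Phi by apply/isW_root/delta_root.
case: (pos_or_neg Hk) => Hp; first exact: pos_ge0.
by case: (HJ k kJ); split => //; apply: pos_delta.
Qed.

Lemma descent w : isW w -> (0 < ninv w)%N -> exists i, inv w (Delta i).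
Proof.
move=> Hw; rewrite lt0n => /eqP H.
case: (classic (exists i, inv w (Delta i))) => // Hn; exfalso; apply: H.
apply/eqP; rewrite -leqn0 leqNgt -has_count; apply/hasP => -[b].
rewrite mem_undup /Nb => Hb; case: asbP => // Hi _.
apply: (@descentJ w setT Hw _ b (proj1 Hi)) => //.
  by move=> j _ Hj; apply: Hn; exists j.
by move=> k; rewrite in_setT.
Qed.

Lemma Nb_inj_aux m : forall v w, isW v -> isW w -> ninv w = m ->
  (forall b, Nb v b = Nb w b) -> v = w.
Proof.
elim: m {-2}m (leqnn m) => [|m IH] m'.
  rewrite leqn0 => /eqP -> v w Hv Hw H0 E.
  have H0' : ninv v = 0%N by rewrite /ninv (eq_count E).
  by rewrite (ninv0 Hw H0) (ninv0 Hv H0').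
move=> Hm v w Hv Hw Hn E.
case: (posnP (ninv w)) => H0.
  have H0' : ninv v = 0%N by rewrite /ninv (eq_count E).
  by rewrite (ninv0 Hw H0) (ninv0 Hv H0').
case: (descent Hw H0) => i Hi.
have Hi' : Nb w (Delta i) by apply/asbP.
have Hvs : isW (v *m s i) by apply: isW_mul => //; apply: isW_s.
have Hws : isW (w *m s i) by apply: isW_mul => //; apply: isW_s.
have : v *m s i = w *m s i.
  apply: (IH (ninv (w *m s i))) => //.
    by rewrite -ltnS (leq_trans _ Hm) // -Hn ninv_ws_lt.
  by move=> b; rewrite !Nb_ws // !E.
by move/(congr1 (mulmx^~ (s i))); rewrite -!mulmxA s_invol !mulmx1.
Qed.

Lemma Nb_inj v w : isW v -> isW w -> (forall b, Nb v b = Nb w b) -> v = w.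
Proof. by move=> Hv Hw; apply: (@Nb_inj_aux (ninv w)). Qed.
Implicit Types (K J : {set 'I_r}).

Lemma red_iff x y : isW x -> isW y ->
  (ninv (x *m y) = ninv x + ninv y)%N <-> (forall c, inv x c -> ~ inv y^T c).
Proof.
move=> Hx Hy; have F := ninv_formula' Hx Hy; split.
  move=> E c H1 H2; have : kcap x y = 0%N by lia.
  move/eqP; rewrite -leqn0 leqNgt -has_count => /hasP; apply.
  exists c; first by rewrite mem_undup; case: H1 => /pos_root.
  by rewrite /Nb; do 2 case: asbP => //.
move=> H; suff : kcap x y = 0%N by lia.
apply/eqP; rewrite -leqn0 leqNgt -has_count; apply/hasP => -[c _].
rewrite /Nb; case: asbP => //= H1; case: asbP => //= H2.
by case: (H c H1 H2).
Qed.

Lemma red_sub x y : isW x -> isW y -> (forall c, inv x c -> ~ inv y^T c) ->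
  forall b, inv y b -> inv (x *m y) b.
Proof.
move=> Hx Hy H b [Hb Hn]; split => //.
have Hyb : y *m b \in Phi by apply/isW_root/pos_root.
have Hc : inv y^T (- (y *m b)).
  by split => //; rewrite mulmxN opprK mulmxA isW_Ktr // mul1mx.
have Hxc : x *m (- (y *m b)) \in Phi by apply/isW_root/oppr_root.
case: (pos_or_neg Hxc) => Hp.
  by rewrite -mulmxA -mulmxN.
by case: (H _ (conj Hn Hp) Hc).
Qed.

Lemma inv_prod x y b : isW y -> inv (x *m y) b -> inv y b \/ inv x (y *m b).
Proof.
move=> Hy [Hb Hn]; have Hyb : y *m b \in Phi by apply/isW_root/pos_root.
case: (pos_or_neg Hyb) => Hp; [right|left]; split => //.
by rewrite mulmxA.
Qed.

Definition inWK (K : {set 'I_r}) (w : mat) :=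
  exists t, all (fun i => i \in K) t /\ w = word t.

Lemma inWK_W (K : {set 'I_r}) w : inWK K w -> isW w.
Proof. by case=> t [_ ->]; exists t. Qed.

Lemma inWK1 (K : {set 'I_r}) : inWK K 1%:M.
Proof. by exists [::]. Qed.

Lemma inWK_s (K : {set 'I_r}) i : i \in K -> inWK K (s i).
Proof. by move=> Hi; exists [:: i]; rewrite /= Hi mulmx1. Qed.

Lemma inWK_mul (K : {set 'I_r}) v w : inWK K v -> inWK K w -> inWK K (v *m w).
Proof. by case=> t [Ht ->] [t' [Ht' ->]]; exists (t ++ t'); rewrite all_cat Ht Ht' word_cat. Qed.

Lemma inWK_tr (K : {set 'I_r}) w : inWK K w -> inWK K w^T.
Proof. by case=> t [Ht ->]; exists (rev t); rewrite all_rev Ht word_tr. Qed.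

Lemma inWK_sub K (K' : {set 'I_r}) w : K \subset K' -> inWK K w -> inWK K' w.
Proof.
move=> sub [t [Ht ->]]; exists t; split => //.
by apply/allP => i Hi; apply: (subsetP sub); move/allP: Ht; apply.
Qed.

Lemma inWK_T w : isW w -> inWK setT w.
Proof. by case=> t ->; exists t; split => //; apply/allP => i; rewrite in_setT. Qed.

Lemma spanJ_delta (K : {set 'I_r}) i : i \in K -> spanJ K (Delta i).
Proof. by move=> Hi k kK; rewrite coef_delta; case: eqP => // E; rewrite -E Hi in kK. Qed.

Lemma spanJ_delta_in (K : {set 'I_r}) i : spanJ K (Delta i) -> i \in K.
Proof.
move=> H; apply/negPn/negP => Hi; have := H i Hi; rewrite coef_delta eqxx.
by move/eqP; rewrite oner_eq0.
Qed.

Lemma inWK_coef (K : {set 'I_r}) w v k : inWK K w -> k \notin K -> coef k (w *m v) = coef k v.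
Proof.
case=> t [Ht ->] kK; elim: t Ht v => [|i t IH] /=; first by move=> _ v; rewrite mul1mx.
move=> /andP [iK Ht] v; rewrite -mulmxA coef_s ?IH //.
by apply/eqP => E; rewrite E iK in kK.
Qed.

Lemma inWK_span (K : {set 'I_r}) w b : inWK K w -> spanJ K b -> spanJ K (w *m b).
Proof. by move=> Hw Hb k kK; rewrite (inWK_coef _ Hw kK) Hb. Qed.

Lemma not_spanJ (K : {set 'I_r}) b : ~ spanJ K b -> exists2 k, k \notin K & coef k b != 0.
Proof.
move=> H; case: (classic (exists2 k, k \notin K & coef k b != 0)) => // H'.
case: H => k kK; apply/eqP/negPn/negP => ne; apply: H'; by exists k.
Qed.

Lemma inWK_pos_out (K : {set 'I_r}) w b : inWK K w -> pos b -> ~ spanJ K b -> pos (w *m b).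
Proof.
move=> Hw Hb /not_spanJ [k kK ne].
apply: (@pos_coef_gt0' _ k); first by apply/isW_root/pos_root => //; apply: inWK_W Hw.
by rewrite (inWK_coef _ Hw kK) lt_def ne pos_ge0.
Qed.

Lemma inWK_inv_span (K : {set 'I_r}) w b : inWK K w -> inv w b -> spanJ K b.
Proof.
move=> Hw [Hb Hn]; case: (classic (spanJ K b)) => // H.
by case: (pos_neg_excl (inWK_pos_out Hw Hb H) Hn).
Qed.

Lemma spanJ_s (K : {set 'I_r}) i b : i \in K -> spanJ K b -> spanJ K (s i *m b).
Proof. by move=> Hi; apply: inWK_span; apply: inWK_s. Qed.

Lemma inv_spanJ_inWK_aux (K : {set 'I_r}) m : forall w, isW w -> ninv w = m ->
  (forall b, inv w b -> spanJ K b) -> inWK K w.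
Proof.
elim: m {-2}m (leqnn m) => [|m IH] m'.
  by rewrite leqn0 => /eqP -> w Hw H0 _; rewrite (ninv0 Hw H0); apply: inWK1.
move=> Hm w Hw Hn H.
case: (posnP (ninv w)) => H0; first by rewrite (ninv0 Hw H0); apply: inWK1.
case: (descent Hw H0) => i Hi.
have iK : i \in K by apply/spanJ_delta_in/H.
have Hws : isW (w *m s i) by apply: isW_mul => //; apply: isW_s.
have : inWK K (w *m s i).
  apply: (IH (ninv (w *m s i))) => //.
    by rewrite -ltnS (leq_trans _ Hm) // -Hn ninv_ws_lt //; apply/asbP.
  move=> b Hb; have : Nb (w *m s i) b by apply/asbP.
  rewrite Nb_ws //; case: eqP => [->|bi]; first by move=> _; apply: spanJ_delta.
  move=> /andP [_ /asbP /H Hsb].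
  by rewrite -[b]mul1mx -(s_invol i) -mulmxA; apply: spanJ_s.
move=> Hk; have := inWK_mul Hk (inWK_s iK).
by rewrite -mulmxA s_invol mulmx1.
Qed.

Lemma inv_spanJ_inWK (K : {set 'I_r}) w : isW w -> (forall b, inv w b -> spanJ K b) -> inWK K w.
Proof. by move=> Hw; apply: (@inv_spanJ_inWK_aux K (ninv w)). Qed.

Lemma parabolic_aux (J : {set 'I_r}) m : forall w, isW w -> ninv w = m ->
  exists a c, [/\ isW a, inWK J c, w = a *m c & forall b, spanJ J b -> ~ inv a b].
Proof.
elim: m {-2}m (leqnn m) => [|m IH] m'.
  rewrite leqn0 => /eqP -> w Hw H0; exists w, 1%:M; split; rewrite ?mulmx1 //.
    exact: inWK1.
  move=> b _ Hi; have : (0 < ninv w)%N.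
    rewrite -has_count; apply/hasP; exists b; last by apply/asbP.
    by rewrite mem_undup; case: Hi => /pos_root.
  by rewrite H0.
move=> Hm w Hw Hn.
case: (classic (exists2 j, j \in J & inv w (Delta j))) => [[j jJ Hj]|Hno].
  have Hws : isW (w *m s j) by apply: isW_mul => //; apply: isW_s.
  have [|a [c [Ha Hc E H]]] := IH (ninv (w *m s j)) _ (w *m s j) Hws erefl.
    by rewrite -ltnS (leq_trans _ Hm) // -Hn ninv_ws_lt //; apply/asbP.
  exists a, (c *m s j); split => //; first by apply: inWK_mul => //; apply: inWK_s.
  by rewrite mulmxA -E -mulmxA s_invol mulmx1.
exists w, 1%:M; split; rewrite ?mulmx1 //; first exact: inWK1.
move=> b Hb Hi; apply: (descentJ Hw _ (proj1 Hi) Hb Hi).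
by move=> j jJ Hj; apply: Hno; exists j.
Qed.

Lemma parabolic (J : {set 'I_r}) w : isW w ->
  exists a c, [/\ isW a, inWK J c, w = a *m c & forall b, spanJ J b -> ~ inv a b].
Proof. by move=> Hw; apply: (@parabolic_aux J (ninv w)). Qed.

Lemma parabolicK (K : {set 'I_r}) J w : J \subset K -> inWK K w ->
  exists a c, [/\ inWK K a, inWK J c, w = a *m c & forall b, spanJ J b -> ~ inv a b].
Proof.
move=> sub Hw; case: (parabolic J (inWK_W Hw)) => a [c [Ha Hc E H]].
exists a, c; split => //.
have -> : a = w *m c^T by rewrite E -mulmxA isW_trK ?mulmx1 //; apply: inWK_W Hc.
by apply: inWK_mul => //; apply: inWK_tr; apply: inWK_sub Hc.
Qed.

Lemma red_para a c J : isW a -> inWK J c -> (forall b, spanJ J b -> ~ inv a b) ->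
  forall x, inv a x -> ~ inv c^T x.
Proof. by move=> Ha Hc H x Hx Hx'; apply: (H x) => //; apply: inWK_inv_span Hx'; apply: inWK_tr. Qed.

Lemma ninv0' w : isW w -> (forall b, ~ inv w b) -> w = 1%:M.
Proof.
move=> Hw H; apply: ninv0 => //; apply/eqP; rewrite -leqn0 leqNgt -has_count.
by apply/hasP => -[b _]; rewrite /Nb; case: asbP => // /H.
Qed.

Lemma tr_eq1 (g g' : mat) : isW g -> isW g' -> g *m g'^T = 1%:M -> g = g'.
Proof.
move=> Hg Hg' E; have := congr1 (mulmx^~ g') E.
by rewrite -mulmxA isW_Ktr // mulmx1 mul1mx.
Qed.

Lemma mul_cancel_r (a a' g : mat) : isW g -> a *m g = a' *m g -> a = a'.
Proof.
move=> Hg E; have := congr1 (mulmx^~ g^T) E.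
by rewrite -!mulmxA isW_trK // !mulmx1.
Qed.

Lemma mul_cancel_l (a a' g : mat) : isW g -> g *m a = g *m a' -> a = a'.
Proof.
move=> Hg E; have := congr1 (mulmx g^T) E.
by rewrite !mulmxA isW_Ktr // !mul1mx.
Qed.

Lemma parabolic_uniq (J : {set 'I_r}) (a a' g g' : mat) : isW a -> isW a' ->
  (forall b, spanJ J b -> ~ inv a b) -> (forall b, spanJ J b -> ~ inv a' b) ->
  inWK J g -> inWK J g' -> a *m g = a' *m g' -> a = a' /\ g = g'.
Proof.
move=> Ha Ha' HA HA' Hg Hg' E.
have Hgw := inWK_W Hg; have Hgw' := inWK_W Hg'.
set h := g *m g'^T.
have Hh : inWK J h by apply: inWK_mul => //; apply: inWK_tr.
have Eh : a' = a *m h by rewrite /h mulmxA E -mulmxA isW_trK ?mulmx1.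
have Hred : forall x, inv a x -> ~ inv h^T x.
  by move=> x Hx Hx'; apply: (HA x) => //; apply: inWK_inv_span Hx'; apply: inWK_tr.
have Hsub := red_sub Ha (inWK_W Hh) Hred.
have h1 : h = 1%:M.
  apply: ninv0' (inWK_W Hh) _ => b Hb.
  apply: (HA' b); first exact: inWK_inv_span Hh Hb.
  by rewrite Eh; apply: Hsub.
have gg : g = g' by apply: tr_eq1.
by split => //; rewrite Eh h1 mulmx1.
Qed.

Lemma restrict_inv (J : {set 'I_r}) a c : isW a -> inWK J c -> (forall b, spanJ J b -> ~ inv a b) ->
  forall b, spanJ J b -> (inv c b <-> inv (a *m c) b).
Proof.
move=> Ha Hc H b Hb; split.
  apply: red_sub => //; first exact: inWK_W Hc.
  move=> x Hx Hx'; apply: (H x) => //; apply: inWK_inv_span Hx'; exact: inWK_tr.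
case/(inv_prod (inWK_W Hc)) => // Hi; exfalso; apply: (H _ _ Hi).
exact: inWK_span.
Qed.

Definition Ecl K (B : vec -> Prop) := forall w, inWK K w -> exists x y,
  [/\ inWK K x, inWK K y, w = x *m y, (forall b, inv x b -> ~ B b) & (forall b, inv y^T b -> B b)].

Definition Ucl K (B : vec -> Prop) := forall x y x' y',
  inWK K x -> inWK K y -> inWK K x' -> inWK K y' ->
  (forall b, inv x b -> ~ B b) -> (forall b, inv y^T b -> B b) ->
  (forall b, inv x' b -> ~ B b) -> (forall b, inv y'^T b -> B b) ->
  x *m y = x' *m y' -> x = x' /\ y = y'.

Definition Good K (u : mat) := Ecl K (inv u^T) /\ Ucl K (inv u^T).

Lemma inv1 b : ~ inv 1%:M b.
Proof. by case; rewrite mul1mx => H1 H2; apply: pos_neg_excl H1 H2. Qed.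

Lemma trK1 (y : mat) : y^T = 1%:M -> y = 1%:M.
Proof. by move=> H; rewrite -[y]trmxK H trmx1. Qed.

Lemma good_trivial K u : u^T = 1%:M -> Good K u.
Proof.
move=> Hu; rewrite /Good Hu; split.
  move=> w Hw; exists w, 1%:M; split; rewrite ?mulmx1 //; first exact: inWK1.
    by move=> b _; apply: inv1.
  by rewrite trmx1 => b /inv1.
move=> x y x' y' Hx Hy Hx' Hy' _ Hy1 _ Hy1' E.
have y1 : y = 1%:M.
  by apply: trK1; apply: ninv0' (inWK_W (inWK_tr Hy)) _ => b /Hy1 /inv1.
have y1' : y' = 1%:M.
  by apply: trK1; apply: ninv0' (inWK_W (inWK_tr Hy')) _ => b /Hy1' /inv1.
by move: E; rewrite y1 y1' !mulmx1.
Qed.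

Lemma WK1 i g : inWK [set i] g -> g = 1%:M \/ g = s i.
Proof.
case=> t [Ht ->]; elim: t Ht => [|j t IH] /=; first by left.
move=> /andP [/set1P -> /IH [->|->]]; first by right; rewrite mulmx1.
by left; rewrite s_invol.
Qed.

Lemma good_A1 i u : u^T = s i -> Good [set i] u.
Proof.
move=> Hu; rewrite /Good Hu; split.
  move=> w Hw; exists 1%:M, w; split; rewrite ?mul1mx //; first exact: inWK1.
    by move=> b /inv1.
  move=> b; case: (WK1 (inWK_tr Hw)) => ->; first by move/inv1.
  by [].
move=> x y x' y' Hx Hy Hx' Hy' Hx1 _ Hx1' _ E.
have xx : forall z, inWK [set i] z -> (forall b, inv z b -> ~ inv (s i) b) -> z = 1%:M.
  move=> z Hz Hz1; case: (WK1 Hz) => // Ez; exfalso.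
  by apply: (Hz1 (Delta i)); [rewrite Ez|]; apply/inv_s.
rewrite (xx _ Hx Hx1) (xx _ Hx' Hx1') in E *; split => //.
by move: E; rewrite !mul1mx.
Qed.

Lemma s_comm i j : dotv (Delta i) (Delta j) = 0 -> s i *m s j = s j *m s i.
Proof.
move=> H; apply: mx_ext => v; rewrite -!mulmxA !(refl_mul (Delta i)) !(refl_mul (Delta j)).
rewrite !dotvBr !dotvZr.
have H' : dotv (Delta j) (Delta i) = 0 by rewrite dotvC.
move: H H'; set a := dotv (Delta i) (Delta j); set b := dotv (Delta j) (Delta i).
move=> -> ->; rewrite !mulr0 !subr0.
by rewrite addrAC.
Qed.

Definition orthJ J1 J2 := forall i j, i \in J1 -> j \in J2 -> dotv (Delta i) (Delta j) = 0.

Lemma comm_WK J1 J2 g1 g2 : orthJ J1 J2 -> inWK J1 g1 -> inWK J2 g2 ->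
  g1 *m g2 = g2 *m g1.
Proof.
move=> Ho [t1 [H1 ->]] [t2 [H2 ->]].
elim: t1 H1 => [|i t1 IH] /=; first by rewrite mul1mx mulmx1.
move=> /andP [iJ H1]; rewrite -mulmxA IH // !mulmxA; congr (_ *m _).
elim: t2 H2 {IH} => [|j t2 IH2] /=; first by rewrite mul1mx mulmx1.
move=> /andP [jJ H2]; rewrite mulmxA s_comm ?Ho // -!mulmxA IH2 //.
Qed.

Lemma split_WK J1 J2 w : orthJ J1 J2 -> inWK (J1 :|: J2) w ->
  exists g1 g2, [/\ inWK J1 g1, inWK J2 g2 & w = g1 *m g2].
Proof.
move=> Ho [t [Ht ->]]; elim: t Ht => [|i t IH] /=.
  by move=> _; exists 1%:M, 1%:M; rewrite mulmx1; split => //; apply: inWK1.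
move=> /andP [/setUP iJ /IH [g1 [g2 [H1 H2 ->]]]].
case: iJ => iJ.
  by exists (s i *m g1), g2; split; rewrite ?mulmxA //; apply: inWK_mul => //; apply: inWK_s.
exists g1, (s i *m g2); split => //; first by apply: inWK_mul => //; apply: inWK_s.
by rewrite mulmxA -(comm_WK Ho H1 (inWK_s iJ)) -mulmxA.
Qed.

Lemma span_disj J1 J2 b : [disjoint J1 & J2] -> pos b -> spanJ J1 b -> spanJ J2 b -> False.
Proof.
move=> Hd Hb H1 H2; apply: (coef_all0 (pos_root Hb)) => k.
case: (boolP (k \in J1)) => k1; last by apply: H1.
by apply: H2; rewrite (disjointFr Hd k1).
Qed.

Lemma count_sub_eq (l : seq vec) (a b : pred vec) : (forall x, x \in l -> a x -> b x) ->
  (count b l <= count a l)%N -> forall x, x \in l -> b x -> a x.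
Proof.
move=> H Hc x Hx Hb; apply/negPn/negP => Ha.
have E1 := count_split b a l.
have E2 : count a l = count (fun z => b z && a z) l.
  by apply: eq_in_count => z Hz; case Ha' : (a z); rewrite ?andbT ?andbF // (H z Hz Ha').
have : (0 < count (fun z => b z && ~~ a z) l)%N.
  by rewrite -has_count; apply/hasP; exists x => //; rewrite Hb Ha.
lia.
Qed.

Lemma inv_union J1 J2 g1 g2 : [disjoint J1 & J2] -> orthJ J1 J2 ->
  inWK J1 g1 -> inWK J2 g2 -> forall b, inv (g1 *m g2) b <-> inv g1 b \/ inv g2 b.
Proof.
move=> Hd Ho H1 H2.
have W1 := inWK_W H1; have W2 := inWK_W H2.
have Hr12 : forall c, inv g1 c -> ~ inv g2^T c.
  move=> c Hc Hc'; apply: (span_disj Hd (proj1 Hc)).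
    exact: inWK_inv_span H1 Hc.
  exact: inWK_inv_span (inWK_tr H2) Hc'.
have Hr21 : forall c, inv g2 c -> ~ inv g1^T c.
  move=> c Hc Hc'; apply: (span_disj Hd (proj1 Hc)).
    exact: inWK_inv_span (inWK_tr H1) Hc'.
  exact: inWK_inv_span H2 Hc.
have sub2 := red_sub W1 W2 Hr12.
have sub1 : forall b, inv g1 b -> inv (g1 *m g2) b.
  by move=> b Hb; rewrite (comm_WK Ho H1 H2); apply: red_sub.
have Ecnt := proj2 (red_iff W1 W2) Hr12.
have Hsub : forall b, b \in undup Phi -> Nb (g1 *m g2) b -> (Nb g1 b || Nb g2 b).
  apply: (@count_sub_eq _ (fun b => Nb g1 b || Nb g2 b) (Nb (g1 *m g2))).
    move=> b _ /orP [] /asbP H; apply/asbP; [exact: sub1 | exact: sub2].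
  have := count_predUI (Nb g1) (Nb g2) (undup Phi).
  have -> : count (predI (Nb g1) (Nb g2)) (undup Phi) = 0%N.
    apply/eqP; rewrite -leqn0 leqNgt -has_count; apply/hasP => -[c _] /andP [/asbP Hc /asbP Hc'].
    apply: (span_disj Hd (proj1 Hc)); [exact: inWK_inv_span H1 Hc | exact: inWK_inv_span H2 Hc'].
  rewrite addn0 => E.
  have -> : count (fun b => Nb g1 b || Nb g2 b) (undup Phi) = (ninv g1 + ninv g2)%N by rewrite -E.
  by rewrite -Ecnt.
move=> b; split; last by case; [apply: sub1 | apply: sub2].
move=> Hb; have : Nb g1 b || Nb g2 b.
  by apply: Hsub; [rewrite mem_undup; case: Hb => /pos_root | apply/asbP].
by case/orP => /asbP; [left|right].
Qed.

Lemma good_red J1 J2 g1 g2 : [disjoint J1 & J2] -> orthJ J1 J2 ->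
  inWK J1 g1 -> inWK J2 g2 -> Good J1 g1 -> Good J2 g2 -> Good (J1 :|: J2) (g1 *m g2).
Proof.
move=> Hd Ho H1 H2 [E1 U1] [E2 U2].
have Ho' : orthJ J2 J1 by move=> i j Hi Hj; rewrite dotvC; apply: Ho.
have Hd' : [disjoint J2 & J1] by rewrite disjoint_sym.
have sub1 : J1 \subset J1 :|: J2 by apply: subsetUl.
have sub2 : J2 \subset J1 :|: J2 by apply: subsetUr.
have Eu : (g1 *m g2)^T = g1^T *m g2^T.
  by rewrite trmx_mul; apply: comm_WK Ho' (inWK_tr H2) (inWK_tr H1).
have HB : forall b, inv (g1 *m g2)^T b <-> inv g1^T b \/ inv g2^T b.
  by rewrite Eu; apply: (inv_union Hd Ho (inWK_tr H1) (inWK_tr H2)).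
(* useful: inversions of J1-elements live in span J1 *)
have dis : forall (p q : mat) b, inWK J1 p -> inWK J2 q -> inv p b -> inv q b -> False.
  move=> p q b Hp Hq Hpb Hqb; apply: (span_disj Hd (proj1 Hpb)).
    exact: inWK_inv_span Hp Hpb.
  exact: inWK_inv_span Hq Hqb.
split.
  move=> w Hw; case: (split_WK Ho Hw) => h1 [h2 [Hh1 Hh2 ->]].
  case: (E1 _ Hh1) => x1 [y1 [Hx1 Hy1 Eh1 Cx1 Cy1]].
  case: (E2 _ Hh2) => x2 [y2 [Hx2 Hy2 Eh2 Cx2 Cy2]].
  exists (x1 *m x2), (y1 *m y2); split.
  - by apply: inWK_mul; [apply: inWK_sub Hx1 | apply: inWK_sub Hx2].
  - by apply: inWK_mul; [apply: inWK_sub Hy1 | apply: inWK_sub Hy2].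
  - rewrite Eh1 Eh2 -!mulmxA; congr (_ *m _); rewrite !mulmxA; congr (_ *m _).
    exact: comm_WK Ho Hy1 Hx2.
  - move=> b /(inv_union Hd Ho Hx1 Hx2) [] Hb /HB [] Hb'.
    + exact: Cx1 Hb Hb'.
    + exact: dis Hx1 (inWK_tr H2) Hb Hb'.
    + exact: dis (inWK_tr H1) Hx2 Hb' Hb.
    + exact: Cx2 Hb Hb'.
  - move=> b; rewrite trmx_mul (comm_WK Ho' (inWK_tr Hy2) (inWK_tr Hy1)).
    move/(inv_union Hd Ho (inWK_tr Hy1) (inWK_tr Hy2)) => [] Hb; apply/HB; [left|right].
      exact: Cy1.
    exact: Cy2.
move=> x y x' y' Hx Hy Hx' Hy' Cx Cy Cx' Cy' E.
case: (split_WK Ho Hx) => x1 [x2 [Hx1 Hx2 Ex]].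
case: (split_WK Ho Hy) => y1 [y2 [Hy1 Hy2 Ey]].
case: (split_WK Ho Hx') => x1' [x2' [Hx1' Hx2' Ex']].
case: (split_WK Ho Hy') => y1' [y2' [Hy1' Hy2' Ey']].
have regroup : forall a1 a2 b1 b2 : mat, inWK J2 a2 -> inWK J1 b1 ->
    (a1 *m a2) *m (b1 *m b2) = (a1 *m b1) *m (a2 *m b2).
  move=> a1 a2 b1 b2 Ha2 Hb1; rewrite -!mulmxA; congr (_ *m _); rewrite !mulmxA.
  by congr (_ *m _); apply: comm_WK Ho' Ha2 Hb1.
have prod_uniq : forall p1 p2 q1 q2 : mat, inWK J1 p1 -> inWK J2 p2 -> inWK J1 q1 -> inWK J2 q2 ->
    p1 *m p2 = q1 *m q2 -> p1 = q1 /\ p2 = q2.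
  move=> p1 p2 q1 q2 Hp1 Hp2 Hq1 Hq2 Epq.
  set h := q1^T *m p1.
  have Hh1 : inWK J1 h by apply: inWK_mul => //; apply: inWK_tr.
  have Eh : h = q2 *m p2^T.
    rewrite /h; apply: (@mul_cancel_l _ _ q1); first exact: inWK_W Hq1.
    rewrite mulmxA isW_trK ?mul1mx; last exact: inWK_W Hq1.
    apply: (@mul_cancel_r _ _ p2); first exact: inWK_W Hp2.
    by rewrite -!mulmxA isW_Ktr ?mulmx1 //; apply: inWK_W Hp2.
  have Hh2 : inWK J2 h by rewrite Eh; apply: inWK_mul => //; apply: inWK_tr.
  have h1 : h = 1%:M.
    apply: ninv0' (inWK_W Hh1) _ => z Hz; exact: (dis h h z Hh1 Hh2 Hz Hz).
  have pq1 : p1 = q1.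
    apply: (@mul_cancel_l _ _ q1^T); first by apply: isW_tr; apply: inWK_W Hq1.
    by rewrite -/h h1 isW_Ktr //; apply: inWK_W Hq1.
  split => //; move: Epq; rewrite pq1; apply: mul_cancel_l; exact: inWK_W Hq1.
have E' : (x1 *m y1) *m (x2 *m y2) = (x1' *m y1') *m (x2' *m y2').
  by rewrite -(regroup x1 x2 y1 y2 Hx2 Hy1) -(regroup x1' x2' y1' y2' Hx2' Hy1') -Ex -Ey -Ex' -Ey'.
have [E1' E2'] := prod_uniq _ _ _ _ (inWK_mul Hx1 Hy1) (inWK_mul Hx2 Hy2)
   (inWK_mul Hx1' Hy1') (inWK_mul Hx2' Hy2') E'.
have Hxinv : forall (p1 p2 : mat) b, inWK J1 p1 -> inWK J2 p2 -> inv p1 b \/ inv p2 b ->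
    inv (p1 *m p2) b.
  by move=> p1 p2 b Hp1 Hp2 /(inv_union Hd Ho Hp1 Hp2).
have Hyinv : forall (p1 p2 : mat) b, inWK J1 p1 -> inWK J2 p2 -> inv p1^T b \/ inv p2^T b ->
    inv (p1 *m p2)^T b.
  move=> p1 p2 b Hp1 Hp2 H; rewrite trmx_mul (comm_WK Ho' (inWK_tr Hp2) (inWK_tr Hp1)).
  by apply/(inv_union Hd Ho (inWK_tr Hp1) (inWK_tr Hp2)).
have [ex1 ey1] : x1 = x1' /\ y1 = y1'.
  apply: (U1 _ _ _ _ Hx1 Hy1 Hx1' Hy1') => // b Hb.
  - by move=> Hb'; apply: (Cx b); [rewrite Ex; apply: Hxinv; tauto | apply/HB; left].
  - have : inv (g1 *m g2)^T b by apply: Cy; rewrite Ey; apply: Hyinv => //; left.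
    by case/HB => // Hb'; case: (dis _ _ _ (inWK_tr Hy1) (inWK_tr H2) Hb Hb').
  - by move=> Hb'; apply: (Cx' b); [rewrite Ex'; apply: Hxinv; tauto | apply/HB; left].
  - have : inv (g1 *m g2)^T b by apply: Cy'; rewrite Ey'; apply: Hyinv => //; left.
    by case/HB => // Hb'; case: (dis _ _ _ (inWK_tr Hy1') (inWK_tr H2) Hb Hb').
have [ex2 ey2] : x2 = x2' /\ y2 = y2'.
  apply: (U2 _ _ _ _ Hx2 Hy2 Hx2' Hy2') => // b Hb.
  - by move=> Hb'; apply: (Cx b); [rewrite Ex; apply: Hxinv; tauto | apply/HB; right].
  - have : inv (g1 *m g2)^T b by apply: Cy; rewrite Ey; apply: Hyinv => //; right.
    by case/HB => // Hb'; case: (dis _ _ _ (inWK_tr H1) (inWK_tr Hy2) Hb' Hb).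
  - by move=> Hb'; apply: (Cx' b); [rewrite Ex'; apply: Hxinv; tauto | apply/HB; right].
  - have : inv (g1 *m g2)^T b by apply: Cy'; rewrite Ey'; apply: Hyinv => //; right.
    by case/HB => // Hb'; case: (dis _ _ _ (inWK_tr H1) (inWK_tr Hy2') Hb' Hb).
by rewrite Ex Ey Ex' Ey' ex1 ey1 ex2 ey2.
Qed.

Lemma good_case_a K J u : J \subset K -> inWK J u -> Good J u -> Good K u.
Proof.
move=> sub Hu [EJ UJ].
have HB : forall b, inv u^T b -> spanJ J b by move=> b; apply: inWK_inv_span; apply: inWK_tr.
split.
  move=> w Hw; case: (parabolicK sub Hw) => a [c [Ha Hc -> Hac]].
  case: (EJ _ Hc) => x' [y [Hx' Hy Ec Cx Cy]].
  exists (a *m x'), y; split.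
  - by apply: inWK_mul => //; apply: inWK_sub Hx'.
  - exact: inWK_sub Hy.
  - by rewrite Ec mulmxA.
  - move=> b /(inv_prod (inWK_W Hx')) [Hb|Hb] Bb; first exact: Cx Hb Bb.
    by apply: (Hac _ _ Hb); apply: inWK_span => //; apply: HB.
  - exact: Cy.
move=> x y x' y' Hx Hy Hx' Hy' Cx Cy Cx' Cy' E.
have HyJ : forall z, inWK K z -> (forall b, inv z^T b -> inv u^T b) -> inWK J z.
  move=> z Hz Cz; rewrite -[z]trmxK; apply: inWK_tr; apply: inv_spanJ_inWK.
    by apply: isW_tr; apply: inWK_W Hz.
  by move=> b /Cz /HB.
have HyJ1 := HyJ _ Hy Cy; have HyJ2 := HyJ _ Hy' Cy'.
case: (parabolic J (inWK_W Hx)) => a [c [Ha Hc Ex Hac]].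
case: (parabolic J (inWK_W Hx')) => a' [c' [Ha' Hc' Ex' Hac']].
have [aa cy] : a = a' /\ c *m y = c' *m y'.
  apply: (parabolic_uniq Ha Ha' Hac Hac' (inWK_mul Hc HyJ1) (inWK_mul Hc' HyJ2)).
  by rewrite !mulmxA -Ex -Ex'.
have Cc : forall (a c : mat), isW a -> inWK J c -> (forall b, spanJ J b -> ~ inv a b) ->
    (forall b, inv (a *m c) b -> ~ inv u^T b) -> forall b, inv c b -> ~ inv u^T b.
  move=> a0 c0 Ha0 Hc0 H0 C0 b Hb; apply: C0.
  apply: red_sub => //; first exact: inWK_W Hc0.
  exact: red_para Ha0 Hc0 H0.
have [cc yy] := UJ _ _ _ _ Hc HyJ1 Hc' HyJ2 (Cc _ _ Ha Hc Hac (eq_ind _ (fun z => forall b, inv z b -> ~ inv u^T b) Cx _ Ex))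
  Cy (Cc _ _ Ha' Hc' Hac' (eq_ind _ (fun z => forall b, inv z b -> ~ inv u^T b) Cx' _ Ex')) Cy' cy.
by rewrite Ex Ex' aa cc yy.
Qed.

Lemma spanJN K b : spanJ K b -> spanJ K (- b).
Proof. by move=> H k kK; rewrite coefN H ?oppr0. Qed.

Lemma coef_mul (w : mat) b l : b \in Phi ->
  coef l (w *m b) = \sum_k coef k b * coef l (w *m Delta k).
Proof.
move=> Hb; rewrite {1}(root_span Hb) mulmx_comb coef_sum.
by apply: eq_bigr => k _; rewrite coefZ.
Qed.

Lemma nat_ge1 (x : R) : (exists m : nat, x = m%:R) -> x != 0 -> 1 <= x.
Proof. by case=> k ->; rewrite pnatr_eq0 ler1n lt0n. Qed.

Definition ht (b : vec) := \sum_l coef l b.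

Lemma pos_ht b : pos b -> 1 <= ht b.
Proof.
move=> Hb.
case: (classic (exists k, coef k b != 0)) => [[k Hk]|H]; last first.
  exfalso; apply: (coef_all0 (pos_root Hb)) => k; apply/eqP/negPn/negP => ne.
  by apply: H; exists k.
rewrite /ht (bigD1 k) //= -[1]addr0; apply: lerD.
  exact: nat_ge1 (pos_nat Hb k) Hk.
by apply: sumr_ge0 => l _; apply: pos_ge0.
Qed.

Lemma ht_comb (c : 'I_r -> R) (v : 'I_r -> vec) :
  ht (\sum_k c k *: v k) = \sum_k c k * ht (v k).
Proof.
rewrite /ht; under eq_bigr do rewrite coef_sum.
rewrite exchange_big /=; apply: eq_bigr => k _.
by rewrite mulr_sumr; apply: eq_bigr => l _; rewrite coefZ.
Qed.

Lemma ht_delta j : ht (Delta j) = 1.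
Proof.
rewrite /ht (bigD1 j) //= coef_delta eqxx big1 ?addr0 // => l lj.
by rewrite coef_delta eq_sym (negbTE lj).
Qed.

Lemma inWK_not_span J g b : inWK J g -> ~ spanJ J b -> ~ spanJ J (g *m b).
Proof.
move=> Hg Hb Hgb; apply: Hb; have := inWK_span (inWK_tr Hg) Hgb.
by rewrite mulmxA isW_Ktr ?mul1mx //; apply: inWK_W Hg.
Qed.

Lemma map_span (w : mat) (A A' : {set 'I_r}) b : isW w ->
  (forall k, k \in A -> exists2 j, j \in A' & w *m Delta k = Delta j) ->
  b \in Phi -> spanJ A b -> spanJ A' (w *m b) /\ (pos b -> pos (w *m b)).
Proof.
move=> Hw HA Hb Hs.
have term : forall l k, coef k b * coef l (w *m Delta k) =
    if k \in A then coef k b * coef l (w *m Delta k) else 0.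
  by move=> l k; case: ifP => // /negbT kA; rewrite Hs // mul0r.
split.
  move=> l lA; rewrite coef_mul // big1 // => k _; rewrite term; case: ifP => // kA.
  case: (HA k kA) => j jA' ->; rewrite coef_delta; case: eqP => [E|]; last by rewrite mulr0.
  by rewrite -E jA' in lA.
move=> Hp; apply: pos_coef; first exact: isW_root.
move=> l; rewrite coef_mul // sumr_ge0 // => k _; rewrite term; case: ifP => // kA.
case: (HA k kA) => j jA' ->; rewrite coef_delta.
by apply: mulr_ge0; [apply: pos_ge0 | apply: ler0n].
Qed.

Section CaseB.
Variables (K : {set 'I_r}) (i : 'I_r) (m : mat).
Hypothesis iK : i \in K.
Hypothesis Hm : inWK K m.
Hypothesis Hm1 : forall b, spanJ (K :\ i) b -> ~ inv m b.
Hypothesis Hm2 : forall b, pos b -> spanJ K b -> ~ spanJ (K :\ i) b -> inv m b.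
Local Notation J := (K :\ i).

Lemma mW : isW m. Proof. exact: inWK_W Hm. Qed.
Lemma mTm : m^T *m m = 1%:M. Proof. exact: isW_Ktr mW. Qed.
Lemma mmT : m *m m^T = 1%:M. Proof. exact: isW_trK mW. Qed.

Lemma dk_cases k : k \in K ->
  (pos (m^T *m Delta k) /\ coef i (m^T *m Delta k) = 0) \/
  (pos (- (m^T *m Delta k)) /\ coef i (m^T *m Delta k) < 0).
Proof.
move=> kK; set d := m^T *m Delta k.
have Hd : d \in Phi by apply: isW_root; [apply: isW_tr mW | apply: delta_root].
have md : m *m d = Delta k by rewrite /d mulmxA mmT mul1mx.
have dK : spanJ K d by apply: inWK_span (inWK_tr Hm) (spanJ_delta kK).
case: (pos_or_neg Hd) => Hp; [left|right]; split => //.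
  case: (classic (spanJ J d)) => Hs; first by apply: Hs; rewrite !inE eqxx.
  case: (Hm2 Hp dK Hs) => _; rewrite md => Hn.
  by case: (pos_neg_excl (pos_delta k) Hn).
have Hi : inv m (- d) by split => //; rewrite mulmxN md opprK; apply: pos_delta.
have Hs : ~ spanJ J (- d) by move=> Hs; apply: (Hm1 Hs Hi).
case: (not_spanJ Hs) => l lJ ne.
have lK : l \in K.
  apply/negPn/negP => lK; move/negP: ne; apply; apply/eqP.
  by apply: (spanJN dK).
have li : l = i by apply/eqP; move: lJ; rewrite !inE lK andbT negbK.
rewrite li in ne; have := pos_ge0 Hp i; rewrite coefN oppr_ge0 => H.
by rewrite lt_neqAle H andbT; move: ne; rewrite coefN oppr_eq0.
Qed.

Lemma simple_img j : j \in J -> exists k, k \in K /\ m *m Delta j = Delta k.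
Proof.
move=> jJ; have jK : j \in K by move: jJ; rewrite !inE => /andP [].
have ji : j != i by move: jJ; rewrite !inE => /andP [].
set g := m *m Delta j.
have Hg : g \in Phi by apply: isW_root; [apply: mW | apply: delta_root].
have Pg : pos g.
  case: (pos_or_neg Hg) => // Hn; exfalso.
  by apply: (Hm1 (spanJ_delta jJ)); split => //; apply: pos_delta.
have gK : spanJ K g by apply: inWK_span Hm (spanJ_delta jK).
have Ej : Delta j = \sum_k coef k g *: (m^T *m Delta k).
  by rewrite -mulmx_comb -root_span // /g mulmxA mTm mul1mx.
have cK : forall k, coef k g != 0 -> k \in K.
  by move=> k; apply: contraR => kK; rewrite gK.
have Hterm : forall k, coef k g * coef i (m^T *m Delta k) <= 0.
  move=> k; case: (eqVneq (coef k g) 0) => [->|ne]; first by rewrite mul0r.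
  case: (dk_cases (cK k ne)) => [[_ ->]|[_ Hlt]]; first by rewrite mulr0.
  by rewrite pmulr_rle0 ?ltW // lt_def ne pos_ge0.
have Hsum : \sum_k coef k g * coef i (m^T *m Delta k) = 0.
  have := coef_delta i j; rewrite (negbTE ji) Ej coef_sum => E.
  by rewrite -[RHS]E; apply: eq_bigr => k _; rewrite coefZ.
have Hz : forall k, coef k g * coef i (m^T *m Delta k) = 0.
  move=> k; apply/eqP; rewrite -oppr_eq0; apply/eqP.
  have Hs' : \sum_k - (coef k g * coef i (m^T *m Delta k)) = 0 by rewrite sumrN Hsum oppr0.
  have := @psumr_eq0P _ _ xpredT (fun k => - (coef k g * coef i (m^T *m Delta k))) _ Hs'.
  by apply => //; move=> l _; rewrite oppr_ge0.
have Hposk : forall k, coef k g != 0 -> pos (m^T *m Delta k).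
  move=> k ne; case: (dk_cases (cK k ne)) => [[] //|[_ Hlt]].
  have := Hz k; move/eqP; rewrite mulf_eq0 (negbTE ne) /= => /eqP E.
  by rewrite E ltxx in Hlt.
have Hht : \sum_k coef k g <= 1.
  rewrite -(ht_delta j) Ej ht_comb; apply: ler_sum => k _.
  case: (eqVneq (coef k g) 0) => [->|ne]; first by rewrite mul0r.
  rewrite -[X in X <= _]mulr1; apply: ler_wpM2l; first exact: pos_ge0.
  exact: pos_ht (Hposk k ne).
case: (classic (exists k, coef k g != 0)) => [[k0 ne0]|H]; last first.
  exfalso; apply: (coef_all0 Hg) => k; apply/eqP/negPn/negP => ne.
  by apply: H; exists k.
have c0 := nat_ge1 (pos_nat Pg k0) ne0.
move: Hht; rewrite (bigD1 k0) //= => Hle.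
have Hrest : \sum_(k | k != k0) coef k g = 0.
  apply/eqP; rewrite eq_le sumr_ge0 ?andbT; last by move=> k _; apply: pos_ge0.
  by rewrite -(lerD2l (coef k0 g)) addr0 (le_trans Hle c0).
have Hk0 : coef k0 g = 1 by apply/eqP; rewrite eq_le c0 andbT; move: Hle; rewrite Hrest addr0.
exists k0; split; first exact: cK.
rewrite (root_span Hg) (bigD1 k0) //= Hk0 scale1r big1 ?addr0 // => k kk0.
have Hnn : forall l, l != k0 -> 0 <= coef l g by move=> l _; apply: pos_ge0.
by rewrite (psumr_eq0P Hnn Hrest kk0) scale0r.
Qed.


Definition pi (j : 'I_r) : 'I_r :=
  epsilon (inhabits j) (fun k => k \in K /\ m *m Delta j = Delta k).

Lemma pi_spec j : j \in J -> pi j \in K /\ m *m Delta j = Delta (pi j).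
Proof.
move=> jJ; apply: (epsilon_spec (inhabits j) (fun k => k \in K /\ m *m Delta j = Delta k)).
exact: simple_img.
Qed.

Definition J' := [set pi j | j in J].

Lemma J'_sub : J' \subset K.
Proof. by apply/subsetP => k /imsetP [j jJ ->]; case: (pi_spec jJ). Qed.

Lemma m_img k : k \in J -> exists2 j, j \in J' & m *m Delta k = Delta j.
Proof. by move=> kJ; exists (pi k); [apply: imset_f | case: (pi_spec kJ)]. Qed.

Lemma mT_img k : k \in J' -> exists2 j, j \in J & m^T *m Delta k = Delta j.
Proof.
case/imsetP => j jJ ->; exists j => //; case: (pi_spec jJ) => _ <-.
by rewrite mulmxA mTm mul1mx.
Qed.

Lemma m_span b : b \in Phi -> spanJ J b -> spanJ J' (m *m b) /\ (pos b -> pos (m *m b)).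
Proof. by apply: map_span mW m_img. Qed.

Lemma mT_span b : b \in Phi -> spanJ J' b -> spanJ J (m^T *m b) /\ (pos b -> pos (m^T *m b)).
Proof. by apply: map_span (isW_tr mW) mT_img. Qed.

Lemma conj_in g : inWK J g -> inWK J' (m *m g *m m^T).
Proof.
case=> t [Ht ->]; elim: t Ht => [|j t IH] /=.
  by move=> _; rewrite mulmx1 mmT; apply: inWK1.
move=> /andP [jJ Ht].
have -> : m *m (s j *m word t) *m m^T = (m *m s j *m m^T) *m (m *m word t *m m^T).
  by rewrite !mulmxA -[m *m s j *m m^T *m m]mulmxA mTm mulmx1.
apply: inWK_mul; last exact: IH.
rewrite refl_conj ?mW //; last exact: isW_orth mW.
case: (m_img jJ) => k kJ' ->; exact: inWK_s.
Qed.

Lemma conj_out h : inWK J' h -> exists2 g, inWK J g & h = m *m g *m m^T.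
Proof.
case=> t [Ht ->]; elim: t Ht => [|k t IH] /=.
  by move=> _; exists 1%:M; [apply: inWK1 | rewrite mulmx1 mmT].
move=> /andP [kJ' /IH [g Hg ->]].
case: (mT_img kJ') => j jJ Ej.
exists (s j *m g); first by apply: inWK_mul => //; apply: inWK_s.
have Ek : Delta k = m *m Delta j by rewrite -Ej mulmxA mmT mul1mx.
rewrite Ek -refl_conj; last exact: isW_orth mW.
by rewrite !mulmxA -[m *m s j *m m^T *m m]mulmxA mTm mulmx1.
Qed.

Lemma inv_conj g b : inWK J g ->
  (inv (m *m g *m m^T) b <-> spanJ J' b /\ inv g (m^T *m b)).
Proof.
move=> Hg; have Hgc := conj_in Hg; split.
  move=> Hb; have bJ' := inWK_inv_span Hgc Hb.
  case: Hb => Pb Nb'; have Hb := pos_root Pb.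
  case: (mT_span Hb bJ') => dJ /(_ Pb) Pd; split => //; split => //.
  have Hgd : g *m (m^T *m b) \in Phi by apply: isW_root (inWK_W Hg) (pos_root Pd).
  case: (pos_or_neg Hgd) => // Hp; exfalso.
  case: (m_span Hgd (inWK_span Hg dJ)) => _ /(_ Hp) Hp'.
  by apply: (pos_neg_excl Hp'); rewrite !mulmxA.
case=> bJ' [Pd Nd].
have Hd := pos_root Pd.
have Hb : b \in Phi by rewrite -[b]mul1mx -mmT -mulmxA; apply: isW_root mW Hd.
have dJ := proj1 (mT_span Hb bJ').
split.
  rewrite -[b]mul1mx -mmT -mulmxA; exact: (proj2 (m_span Hd dJ) Pd).
have Hgd : - (g *m (m^T *m b)) \in Phi by apply: oppr_root; apply: isW_root (inWK_W Hg) Hd.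
have := proj2 (m_span Hgd (spanJN (inWK_span Hg dJ))) Nd.
by rewrite mulmxN !mulmxA.
Qed.

Variable c : mat.
Hypothesis Hc : inWK J c.

Lemma cW : isW c. Proof. exact: inWK_W Hc. Qed.

Lemma Fb1 b : spanJ J' b -> (inv (m *m c)^T b <-> inv c^T (m^T *m b)).
Proof.
move=> bJ'; rewrite trmx_mul; split.
  case=> Pb Nb'; have Hb := pos_root Pb.
  by split; [exact: (proj2 (mT_span Hb bJ') Pb) | rewrite mulmxA].
case=> Pd Nd; have Hd := pos_root Pd.
have Hb : b \in Phi by rewrite -[b]mul1mx -mmT -mulmxA; apply: isW_root mW Hd.
split; last by rewrite -mulmxA.
case: (pos_or_neg Hb) => // Hn; exfalso.
have := proj2 (mT_span (oppr_root Hb) (spanJN bJ')) Hn.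
by rewrite mulmxN => /(pos_neg_excl Pd).
Qed.

Lemma Fb2 b : pos b -> spanJ K b -> ~ spanJ J' b -> inv (m *m c)^T b.
Proof.
move=> Pb bK bJ'; have Hb := pos_root Pb.
set d := m^T *m b.
have Hd : d \in Phi by apply: isW_root (isW_tr mW) Hb.
have md : m *m d = b by rewrite /d mulmxA mmT mul1mx.
have dK : spanJ K d by apply: inWK_span (inWK_tr Hm) bK.
have dJ : ~ spanJ J d.
  by move=> H; apply: bJ'; rewrite -md; apply: (proj1 (m_span Hd H)).
case: (pos_or_neg Hd) => Hp.
  by case: (Hm2 Hp dK dJ) => _; rewrite md => /(pos_neg_excl Pb).
have dJ' : ~ spanJ J (- d) by move=> H; apply: dJ; rewrite -[d]opprK; apply: spanJN.
have := inWK_pos_out (inWK_tr Hc) Hp dJ'.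
by rewrite trmx_mul => H; split => //; rewrite -mulmxA -mulmxN.
Qed.

Lemma left_para w : inWK K w -> exists g a,
  [/\ inWK J' g, inWK K a, w = g *m a & forall b, spanJ J' b -> ~ inv a^T b].
Proof.
move=> Hw; case: (parabolicK J'_sub (inWK_tr Hw)) => a' [c' [Ha' Hc' E H]].
exists c'^T, a'^T; split; rewrite ?trmxK //; try by apply: inWK_tr.
by rewrite -trmx_mul -E trmxK.
Qed.

Lemma left_uniq g a g' a' : inWK J' g -> inWK J' g' -> inWK K a -> inWK K a' ->
  (forall b, spanJ J' b -> ~ inv a^T b) -> (forall b, spanJ J' b -> ~ inv a'^T b) ->
  g *m a = g' *m a' -> g = g' /\ a = a'.
Proof.
move=> Hg Hg' Ha Ha' C C' E.
have := @parabolic_uniq J' a^T a'^T g^T g'^T.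
case.
- by apply: isW_tr; apply: inWK_W Ha.
- by apply: isW_tr; apply: inWK_W Ha'.
- exact: C.
- exact: C'.
- exact: inWK_tr.
- exact: inWK_tr.
- by rewrite -!trmx_mul E.
by move=> E1 E2; split; rewrite -[LHS]trmxK -[RHS]trmxK ?E1 ?E2.
Qed.

Lemma good_case_b : Good J c -> Good K (m *m c).
Proof.
move=> [EJ UJ]; split.
  move=> w Hw; case: (left_para Hw) => g [a [Hg Ha -> Ca]].
  case: (conj_out Hg) => gt Hgt ->.
  case: (EJ _ Hgt) => xt [yt [Hxt Hyt Et Cxt Cyt]].
  exists (m *m xt *m m^T), (m *m yt *m m^T *m a); split.
  - exact: inWK_sub J'_sub (conj_in Hxt).
  - by apply: inWK_mul => //; apply: inWK_sub J'_sub (conj_in Hyt).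
  - rewrite Et !mulmxA; congr (_ *m _); congr (_ *m _).
    by rewrite -[m *m xt *m m^T *m m]mulmxA mTm mulmx1.
  - move=> b /(inv_conj _ Hxt) [bJ' Hb] /(Fb1 bJ'); exact: Cxt.
  - move=> b Hb.
    have HyK : inWK K (m *m yt *m m^T *m a).
      by apply: inWK_mul => //; apply: inWK_sub J'_sub (conj_in Hyt).
    have bK := inWK_inv_span (inWK_tr HyK) Hb.
    case: (classic (spanJ J' b)) => bJ'; last exact: Fb2 (proj1 Hb) bK bJ'.
    apply/(Fb1 bJ'); apply: Cyt.
    have Eh : (m *m yt *m m^T)^T = m *m yt^T *m m^T by rewrite !trmx_mul trmxK mulmxA.
    move: Hb; rewrite trmx_mul Eh.
    case/(inv_prod (inWK_W (conj_in (inWK_tr Hyt)))).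
      by case/(inv_conj _ (inWK_tr Hyt)).
    move=> Hab; exfalso; apply: (Ca _ _ Hab).
    exact: inWK_span (conj_in (inWK_tr Hyt)) bJ'.
move=> x y x' y' Hx Hy Hx' Hy' Cx Cy Cx' Cy' E.
have HxJ : forall z, inWK K z -> (forall b, inv z b -> ~ inv (m *m c)^T b) -> inWK J' z.
  move=> z Hz Cz; apply: inv_spanJ_inWK (inWK_W Hz) _ => b Hb.
  case: (classic (spanJ J' b)) => // bJ'; exfalso.
  exact: (Cz b Hb (Fb2 (proj1 Hb) (inWK_inv_span Hz Hb) bJ')).
have Hx1 := HxJ _ Hx Cx; have Hx1' := HxJ _ Hx' Cx'.
case: (left_para Hy) => h [a [Hh Ha Ey Ca]].
case: (left_para Hy') => h' [a' [Hh' Ha' Ey' Ca']].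
have [Exh Eaa] : x *m h = x' *m h' /\ a = a'.
  apply: (left_uniq (inWK_mul Hx1 Hh) (inWK_mul Hx1' Hh') Ha Ha' Ca Ca').
  by rewrite -!mulmxA -Ey -Ey'.
case: (conj_out Hx1) => xt Hxt Ext.
case: (conj_out Hx1') => xt' Hxt' Ext'.
case: (conj_out Hh) => ht Hht Eht.
case: (conj_out Hh') => ht' Hht' Eht'.
have Cxt : forall z zt, inWK J zt -> z = m *m zt *m m^T ->
    (forall b, inv z b -> ~ inv (m *m c)^T b) -> forall b, inv zt b -> ~ inv c^T b.
  move=> z zt Hzt Ez Cz b Hb.
  have bJ := inWK_inv_span Hzt Hb.
  have Hbr := pos_root (proj1 Hb).
  have mbJ' := proj1 (m_span Hbr bJ).
  have Hb' : inv z (m *m b) by rewrite Ez; apply/(inv_conj _ Hzt); rewrite mulmxA mTm mul1mx.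
  by move=> Hc'; apply: (Cz _ Hb'); apply/(Fb1 mbJ'); rewrite mulmxA mTm mul1mx.
have Cht : forall (yy hh aa : mat) hht, inWK J' hh -> inWK K aa -> inWK J hht ->
    hh = m *m hht *m m^T -> yy = hh *m aa ->
    (forall b, spanJ J' b -> ~ inv aa^T b) ->
    (forall b, inv yy^T b -> inv (m *m c)^T b) -> forall b, inv hht^T b -> inv c^T b.
  move=> yy hh aa hht Hhh Haa Hhht Ehh Eyy Caa Cyy b Hb.
  have bJ := inWK_inv_span (inWK_tr Hhht) Hb.
  have Hbr := pos_root (proj1 Hb).
  have mbJ' := proj1 (m_span Hbr bJ).
  have Hb' : inv hh^T (m *m b).
    rewrite Ehh !trmx_mul trmxK mulmxA; apply/(inv_conj _ (inWK_tr Hhht)).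
    by rewrite mulmxA mTm mul1mx.
  have : inv yy^T (m *m b).
    rewrite Eyy trmx_mul; apply: red_sub => //.
    + by apply: isW_tr; apply: inWK_W Haa.
    + by apply: isW_tr; apply: inWK_W Hhh.
    + move=> z Hz; rewrite trmxK => Hz'; apply: (Caa z) => //.
      exact: inWK_inv_span Hhh Hz'.
  by move/Cyy/(Fb1 mbJ'); rewrite mulmxA mTm mul1mx.
have Et : xt *m ht = xt' *m ht'.
  apply: (@mul_cancel_l _ _ m) => //; first exact: mW.
  apply: (@mul_cancel_r _ _ m^T); first exact: isW_tr mW.
  have E2 : m *m (xt *m ht) *m m^T = x *m h.
    by rewrite Ext Eht !mulmxA -[m *m xt *m m^T *m m]mulmxA mTm mulmx1.
  have E3 : m *m (xt' *m ht') *m m^T = x' *m h'.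
    by rewrite Ext' Eht' !mulmxA -[m *m xt' *m m^T *m m]mulmxA mTm mulmx1.
  by rewrite E2 E3.
have [exx ehh] := UJ _ _ _ _ Hxt Hht Hxt' Hht'
  (Cxt _ _ Hxt Ext Cx) (Cht _ _ _ _ Hh Ha Hht Eht Ey Ca Cy)
  (Cxt _ _ Hxt' Ext' Cx') (Cht _ _ _ _ Hh' Ha' Hht' Eht' Ey' Ca' Cy') Et.
by rewrite Ext Ext' Ey Ey' Eht Eht' exx ehh Eaa.
Qed.

End CaseB.

Lemma in_span_spanJ J b : b \in Phi -> spanJ J b -> in_span Delta J b.
Proof.
move=> Hb Hs; exists (fun k => coef k b); rewrite {1}(root_span Hb).
rewrite [RHS]big_mkcond /=; apply: eq_bigr => k _.
by case: ifP => // /negbT kJ; rewrite Hs // scale0r.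
Qed.

Lemma coef_i_neq0 J i b : spanJ J b -> ~ spanJ (J :\ i) b -> coef i b != 0.
Proof.
move=> HJ /not_spanJ [k kJ ne].
have kJ' : k \in J by apply/negPn/negP => kJ'; move: ne; rewrite HJ ?eqxx.
by have -> : i = k by apply/eqP; move: kJ; rewrite !inE kJ' andbT negbK eq_sym.
Qed.

Lemma rootle_pos i b : pos b -> coef i b != 0 -> rootle Delta (Delta i) b.
Proof.
move=> Pb ne.
pose N k := epsilon (inhabits 0%N) (fun q : nat => coef k b = q%:R).
have HN : forall k, coef k b = (N k)%:R.
  by move=> k; apply: (epsilon_spec (inhabits 0%N) (fun q : nat => coef k b = q%:R)); apply: pos_nat.
have Ni : (0 < N i)%N by rewrite lt0n -(pnatr_eq0 R) -HN.
exists (fun k => if k == i then (N k).-1 else N k).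
rewrite {1}(root_span (pos_root Pb)) (bigD1 i) //= [in RHS](bigD1 i) //= eqxx.
rewrite addrAC; congr (_ + _); last first.
  by apply: eq_bigr => k /negbTE ->; rewrite HN.
rewrite HN -{1}(prednK Ni) -[(N i).-1.+1]addn1 natrD scalerDl scale1r.
by rewrite addrK.
Qed.

Lemma main_ind w J : sep_sub Phi Delta w J -> forall u, inWK J u ->
  (forall b, pos b -> spanJ J b -> (inv u b <-> inv w b)) -> Good J u.
Proof.
elim=> {J}.
- move=> i u Hu _; case: (WK1 Hu) => ->; first by apply: good_trivial; rewrite trmx1.
  by apply: good_A1; rewrite refl_tr.
- move=> J1 J2 _ _ Hd Ho _ IH1 _ IH2 u Hu Hag.
  case: (split_WK Ho Hu) => g1 [g2 [H1 H2 Eu]]; subst u.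
  apply: good_red => //.
    apply: IH1 => // b Pb bJ.
    have bJ12 : spanJ (J1 :|: J2) b.
      by move=> k; rewrite inE negb_or => /andP [k1 _]; apply: bJ.
    have Hn2 : ~ inv g2 b by move=> Hb; apply: (span_disj Hd Pb bJ (inWK_inv_span H2 Hb)).
    move: (Hag b Pb bJ12) (inv_union Hd Ho H1 H2 b); tauto.
  apply: IH2 => // b Pb bJ.
  have bJ12 : spanJ (J1 :|: J2) b.
    by move=> k; rewrite inE negb_or => /andP [_ k2]; apply: bJ.
  have Hn1 : ~ inv g1 b by move=> Hb; apply: (span_disj Hd Pb (inWK_inv_span H1 Hb) bJ).
  move: (Hag b Pb bJ12) (inv_union Hd Ho H1 H2 b); tauto.
- move=> J i _ iJ _ IH Hpiv u Hu Hag.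
  have sub : J :\ i \subset J by apply: subsetDl.
  case: Hpiv => Hpiv.
  +
    case: (parabolicK sub Hu) => m [c [Hm Hc Eu Hm1]].
    have Hm2 : forall b, pos b -> spanJ J b -> ~ spanJ (J :\ i) b -> inv m b.
      move=> b Pb bJ bJi.
      set d := c^T *m b.
      have HcT := inWK_tr Hc.
      have Pd : pos d by apply: inWK_pos_out HcT Pb bJi.
      have dJ : spanJ J d by apply: inWK_span (inWK_sub sub HcT) bJ.
      have dJi := inWK_not_span HcT bJi.
      have Hi : inv u d.
        apply/(Hag _ Pd dJ); apply: Hpiv => //.
          exact: in_span_spanJ (pos_root Pd) dJ.
        exact: rootle_pos Pd (coef_i_neq0 dJ dJi).
      case: Hi => _; rewrite Eu /d !mulmxA -[m *m c *m c^T]mulmxA isW_trK; last exact: inWK_W Hc.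
      by rewrite mulmx1 => Hn; split.
    rewrite Eu; apply: (good_case_b Hm Hm1 Hm2 Hc).
    apply: IH => // b Pb bJi.
    have bJ : spanJ J b by move=> k kJ; apply: bJi; rewrite !inE negb_and kJ orbT.
    move: (restrict_inv (inWK_W Hm) Hc Hm1 bJi) (Hag b Pb bJ); rewrite -Eu; tauto.
  +
    have HuJ : inWK (J :\ i) u.
      apply: (@inv_spanJ_inWK (J :\ i) u (inWK_W Hu)) => b Hb.
      have bJ := inWK_inv_span Hu Hb.
      case: (classic (spanJ (J :\ i) b)) => // bJi; exfalso.
      apply: (Hpiv b (proj1 Hb)).
      - exact: in_span_spanJ (pos_root (proj1 Hb)) bJ.
      - exact: rootle_pos (proj1 Hb) (coef_i_neq0 bJ bJi).
      - exact/(Hag _ (proj1 Hb) bJ).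
    apply: (good_case_a sub HuJ).
    apply: IH => // b Pb bJi; apply: Hag => //.
    by move=> k kJ; apply: bJi; rewrite !inE negb_and kJ orbT.
Qed.

Lemma invmx_W (w : mat) : isW w -> invmx w = w^T.
Proof.
case=> t ->; have H := word_orth t.
have Hu : word t \in unitmx by case: (mulmx1_unit H).
rewrite -[RHS]mul1mx -(mulVmx Hu) -mulmxA.
by rewrite (orth_tr H) mulmx1.
Qed.

Lemma final_thm u : isW u -> separable Phi Delta u ->
  splitting Delta
    (gquot Delta (fun v => isW v /\ leR Phi Delta v u))
    (fun v => isW v /\ leR Phi Delta v u).
Proof.
move=> Hu Hsep.
have [E U] : Good setT u.
  apply: (main_ind Hsep); first exact: inWK_T.
  by move=> b _ _.
have HY : forall v, isW v -> (leR Phi Delta v u <-> forall b, inv v^T b -> inv u^T b).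
  by move=> v Hv; rewrite /leR /leL (invmx_W Hv) (invmx_W Hu).
have HX : forall x, gquot Delta (fun v => isW v /\ leR Phi Delta v u) x <->
    isW x /\ forall b, inv x b -> ~ inv u^T b.
  move=> x; split.
    case=> Hx H; split => //; apply/(red_iff Hx Hu).
    rewrite -!ell_ninv //; last exact: isW_mul.
    by apply: H; split => //; apply/HY.
  case=> Hx H; split => // y [Hy /(HY _ Hy) Hyu].
  rewrite !ell_ninv //; last exact: isW_mul.
  by apply/(red_iff Hx Hy) => c /H Hc /Hyu.
split.
- by move=> x y [Hx _] [Hy _]; apply: isW_mul.
- move=> w Hw; case: (E w (inWK_T Hw)) => x [y [Hx Hy Ew Cx Cy]].
  exists x, y; split => //; first by apply/HX; split => //; apply: inWK_W Hx.
  by split; [apply: inWK_W Hy | apply/HY => //; apply: inWK_W Hy].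
- move=> x y x' y' /HX [Hx Cx] [Hy /(HY _ Hy) Cy] /HX [Hx' Cx'] [Hy' /(HY _ Hy') Cy'] Exy.
  by apply: (U x y x' y') => //; apply: inWK_T.
- move=> x y [Hx H] Hy; exact: H.
Qed.

End Roots.

Theorem theorem4p3 (R : realFieldType) (n r : nat)
    (Phi : seq 'cV[R]_n) (Delta : 'I_r -> 'cV[R]_n) (u : 'M[R]_n) :
  root_system Phi -> simple_system Phi Delta ->
  inW Delta u -> separable Phi Delta u ->
  splitting Delta
    (gquot Delta (fun v => inW Delta v /\ leR Phi Delta v u))
    (fun v => inW Delta v /\ leR Phi Delta v u).
Proof. by move=> HPhi HD; apply: final_thm. Qed.
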